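(* Assume $\Sigma_0=I$, $T>0$, and $R\in M_d(\mathbb{R})$ is a normal matrix satisfying Property (P1). Consider the characteristic equation (with parameter $\lambda\ge0$) $$\lambda\,{\sf C}=F^\top(R-F),\qquad F:=e^{T({\sf C}-{\sf C}^\top)}e^{T{\sf C}^\top}.$$ (i) For $\lambda=0$, a normal matrix ${\sf C}\in M_d(\mathbb{R})$ solves the equation if and only if $e^{T{\sf C}}=R$, i.e. the normal solutions are ${\sf C}=\frac1T L$ where $L\in M_d(\mathbb{R})$ is a (normal) real matrix logarithm of $R$, $e^{L}=R$. (ii) For each such solution ${\sf C}(0)=\frac1T L$ (with $L$ normal, real, $e^L=R$), there exist a neighborhood $\mathcal{N}\subset\mathbb{R}^+$ of $\lambda=0$ and a continuous map $\mathcal{N}\ni\lambda\mapsto{\sf C}(\lambda)\in M_d(\mathbb{R})$ such that ${\sf C}(\lambda)$ is a (normal) solution of the characteristic equation for each $\lambda\in\mathcal N$, ${\sf C}(0)=\frac1TL$, and $${\sf C}(\lambda)=\frac1T L-\frac{\lambda}{T^2}(RR^\top)^{-1}L+O(\lambda^2)\qquad(\lambda\downarrow0).$$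
   Context: Property (P1): the matrix $R\in M_d(\mathbb{R})$ has no eigenvalues in $\mathbb{R}^-=\{x\in\mathbb{R}: x\le 0\}$, and $R$ is non-derogatory (no eigenvalue of $R$ appears in more than one Jordan block). Under (P1) there exist real matrices $L$ with $e^L=R$ (real matrix logarithms, not necessarily unique). $\mathbb{R}^+=\{x\in\mathbb{R}:x\ge0\}$. A real matrix $M$ is normal if $MM^\top=M^\top M$. The characteristic equation above is the case $\Sigma_0=\mathbb{E}[X_0X_0^\top]=I$ of the equation $\lambda{\sf C}=F^\top(R-F)\Sigma_0$ whose solutions parametrize the critical points $A_t=e^{2t\Omega}{\sf C}e^{-2t\Omega}$, $\Omega=\frac12({\sf C}-{\sf C}^\top)$, of the regularized loss ${\sf J}[A]=\mathbb{E}[\frac\lambda2\int_0^T\mathrm{tr}(A_t^\top A_t)dt+\frac12|X_T-Z|^2]$. *)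

(* Defs.v *)
From Stdlib Require Import Reals Lra ClassicalEpsilon Factorial.
Open Scope R_scope.

(* A d x d real matrix is represented as a function nat -> nat -> R;
   only the entries with indices < d are meaningful. *)
Definition Mat := nat -> nat -> R.
Definition Vec := nat -> R.

Fixpoint rsum (n : nat) (f : nat -> R) : R :=
  match n with O => 0 | S m => rsum m f + f m end.

Definition meq (d : nat) (A B : Mat) : Prop :=
  forall i j, (i < d)%nat -> (j < d)%nat -> A i j = B i j.

Definition mid : Mat := fun i j => if Nat.eq_dec i j then 1 else 0.
Definition madd (A B : Mat) : Mat := fun i j => A i j + B i j.
Definition mopp (A : Mat) : Mat := fun i j => - A i j.
Definition msub (A B : Mat) : Mat := madd A (mopp B).
Definition mscale (c : R) (A : Mat) : Mat := fun i j => c * A i j.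
Definition mtr (A : Mat) : Mat := fun i j => A j i.
Definition mmul (d : nat) (A B : Mat) : Mat :=
  fun i j => rsum d (fun k => A i k * B k j).

Fixpoint mpow (d : nat) (A : Mat) (n : nat) : Mat :=
  match n with O => mid | S m => mmul d A (mpow d A m) end.

Definition mexp (d : nat) (A : Mat) : Mat := fun i j =>
  epsilon (inhabits 0)
    (fun l => Un_cv (fun N => rsum (S N) (fun k => mpow d A k i j / INR (fact k))) l).

(* matrix inverse (any right inverse; unique when A is invertible) *)
Definition minv (d : nat) (A : Mat) : Mat :=
  epsilon (inhabits mid) (fun B => meq d (mmul d A B) mid).

Definition normal (d : nat) (M : Mat) : Prop :=
  meq d (mmul d M (mtr M)) (mmul d (mtr M) M).

(* Complex eigenpairs of a real matrix, with lambda = a + i b and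
   eigenvector w = u + i v (u, v real vectors). *)
Definition cvec_nonzero (d : nat) (u v : Vec) : Prop :=
  exists i, (i < d)%nat /\ (u i <> 0 \/ v i <> 0).

Definition is_ceigvec (d : nat) (M : Mat) (a b : R) (u v : Vec) : Prop :=
  cvec_nonzero d u v /\
  forall i, (i < d)%nat ->
    rsum d (fun k => M i k * u k) = a * u i - b * v i /\
    rsum d (fun k => M i k * v k) = a * v i + b * u i.

Definition is_ceigenvalue (d : nat) (M : Mat) (a b : R) : Prop :=
  exists u v, is_ceigvec d M a b u v.

(* non-derogatory: every (complex) eigenvalue has a one-dimensional
   (complex) eigenspace, i.e. appears in only one Jordan block:
   any two eigenvectors for the same eigenvalue are C-linearly dependent. *)
Definition non_derogatory (d : nat) (M : Mat) : Prop :=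
  forall a b u1 v1 u2 v2,
    is_ceigvec d M a b u1 v1 -> is_ceigvec d M a b u2 v2 ->
    exists p1 q1 p2 q2 : R,
      (p1 <> 0 \/ q1 <> 0 \/ p2 <> 0 \/ q2 <> 0) /\
      forall i, (i < d)%nat ->
        p1 * u1 i - q1 * v1 i + p2 * u2 i - q2 * v2 i = 0 /\
        p1 * v1 i + q1 * u1 i + p2 * v2 i + q2 * u2 i = 0.

Definition P1 (d : nat) (M : Mat) : Prop :=
  (forall a : R, a <= 0 -> ~ is_ceigenvalue d M a 0) /\ non_derogatory d M.

Definition Fmat (d : nat) (T : R) (C : Mat) : Mat :=
  mmul d (mexp d (mscale T (msub C (mtr C)))) (mexp d (mscale T (mtr C))).

Definition char_eq (d : nat) (T lam : R) (Rm C : Mat) : Prop :=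
  meq d (mscale lam C) (mmul d (mtr (Fmat d T C)) (msub Rm (Fmat d T C))).

(* Main.v *)
Require Import Defs.
From Stdlib Require Import Reals.
Open Scope R_scope.
From Stdlib Require Import Lra Lia Setoid Morphisms ClassicalEpsilon Factorial.
From Coquelicot Require Import Coquelicot.

Module A.
Open Scope R_scope.

Lemma rsum_ext n f g : (forall k, (k < n)%nat -> f k = g k) -> rsum n f = rsum n g.
Proof. induction n; simpl; intros H; auto. rewrite IHn by (intros; apply H; lia). rewrite H by lia; auto. Qed.
Lemma rsum_plus n f g : rsum n (fun k => f k + g k) = rsum n f + rsum n g.
Proof. induction n; simpl; [lra|rewrite IHn; lra]. Qed.
Lemma rsum_opp n f : rsum n (fun k => - f k) = - rsum n f.
Proof. induction n; simpl; [lra|rewrite IHn; lra]. Qed.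
Lemma rsum_minus n f g : rsum n (fun k => f k - g k) = rsum n f - rsum n g.
Proof. induction n; simpl; [lra|rewrite IHn; lra]. Qed.
Lemma rsum_scal n c f : rsum n (fun k => c * f k) = c * rsum n f.
Proof. induction n; simpl; [lra|rewrite IHn; lra]. Qed.
Lemma rsum_scal_r n c f : rsum n (fun k => f k * c) = rsum n f * c.
Proof. induction n; simpl; [lra|rewrite IHn; lra]. Qed.
Lemma rsum_zero n : rsum n (fun _ => 0) = 0.
Proof. induction n; simpl; [lra|rewrite IHn; lra]. Qed.
Lemma rsum_swap n m (f : nat -> nat -> R) :
  rsum n (fun i => rsum m (fun j => f i j)) = rsum m (fun j => rsum n (fun i => f i j)).
Proof. induction n; simpl. now rewrite rsum_zero. rewrite IHn, <- rsum_plus. auto. Qed.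
Lemma rsum_le n f g : (forall k, (k < n)%nat -> f k <= g k) -> rsum n f <= rsum n g.
Proof. induction n; simpl; intros H; [lra|]. assert (H1 := H n (Nat.lt_succ_diag_r n)).
 assert (rsum n f <= rsum n g) by (apply IHn; intros; apply H; lia). lra. Qed.
Lemma rsum_nonneg n f : (forall k, (k < n)%nat -> 0 <= f k) -> 0 <= rsum n f.
Proof. intros H. rewrite <- (rsum_zero n). apply rsum_le; auto. Qed.
Lemma rsum_abs n f : Rabs (rsum n f) <= rsum n (fun k => Rabs (f k)).
Proof. induction n; simpl. rewrite Rabs_R0; lra.
 eapply Rle_trans; [apply Rabs_triang|lra]. Qed.
Lemma rsum_S n f : rsum (S n) f = rsum n f + f n.
Proof. reflexivity. Qed.
Lemma rsum_shift n f : rsum (S n) f = f O + rsum n (fun k => f (S k)).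
Proof. induction n; simpl in *. lra. rewrite IHn. lra. Qed.
Lemma rsum_delta n i (f : nat -> R) : (i < n)%nat ->
  rsum n (fun k => if Nat.eq_dec i k then f k else 0) = f i.
Proof. induction n; intros H; [lia|]. simpl. destruct (Nat.eq_dec i n).
 - subst. rewrite (rsum_ext _ _ (fun _ => 0)). rewrite rsum_zero; lra.
   intros k Hk. destruct (Nat.eq_dec n k); [lia|auto].
 - rewrite IHn by lia. lra. Qed.
Lemma rsum_delta' n i (f : nat -> R) : (i < n)%nat ->
  rsum n (fun k => if Nat.eq_dec k i then f k else 0) = f i.
Proof. intros H. rewrite <- (rsum_delta n i f H). apply rsum_ext. intros k _.
 destruct (Nat.eq_dec k i), (Nat.eq_dec i k); subst; auto; congruence. Qed.
Lemma rsum_single_le n f i : (i < n)%nat -> (forall k, (k<n)%nat -> 0 <= f k) -> f i <= rsum n f.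
Proof. induction n; intros H H0; [lia|]. simpl. destruct (Nat.eq_dec i n).
 subst. assert (0 <= rsum n f) by (apply rsum_nonneg; intros; apply H0; lia). lra.
 assert (f i <= rsum n f) by (apply IHn; [lia| intros; apply H0; lia]). assert (0 <= f n) by (apply H0; lia). lra. Qed.

Section M.
Variable d : nat.

Global Instance meq_equiv : Equivalence (meq d).
Proof. split. intros A i j _ _; auto. intros A B H i j Hi Hj; symmetry; auto.
 intros A B C H1 H2 i j Hi Hj; rewrite H1, H2; auto. Qed.

Global Instance mmul_proper : Proper (meq d ==> meq d ==> meq d) (mmul d).
Proof. intros A A' HA B B' HB i j Hi Hj. unfold mmul. apply rsum_ext. intros k Hk.
 rewrite HA, HB; auto. Qed.
Global Instance madd_proper : Proper (meq d ==> meq d ==> meq d) madd.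
Proof. intros A A' HA B B' HB i j Hi Hj. unfold madd. rewrite HA, HB; auto. Qed.
Global Instance mopp_proper : Proper (meq d ==> meq d) mopp.
Proof. intros A A' HA i j Hi Hj. unfold mopp. rewrite HA; auto. Qed.
Global Instance msub_proper : Proper (meq d ==> meq d ==> meq d) msub.
Proof. intros A A' HA B B' HB. unfold msub. rewrite HA, HB. reflexivity. Qed.
Global Instance mscale_proper c : Proper (meq d ==> meq d) (mscale c).
Proof. intros A A' HA i j Hi Hj. unfold mscale. rewrite HA; auto. Qed.
Global Instance mtr_proper : Proper (meq d ==> meq d) mtr.
Proof. intros A A' HA i j Hi Hj. unfold mtr. rewrite HA; auto. Qed.

Lemma mmul_assoc A B C : meq d (mmul d (mmul d A B) C) (mmul d A (mmul d B C)).
Proof. intros i j _ _. unfold mmul.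
 rewrite (rsum_ext _ _ (fun k => rsum d (fun l => A i l * B l k * C k j))).
 rewrite rsum_swap. apply rsum_ext. intros l _. rewrite <- rsum_scal. apply rsum_ext.
 intros; ring. intros k _. rewrite <- rsum_scal_r. apply rsum_ext; intros; ring. Qed.
Lemma mmul_id_l A : meq d (mmul d mid A) A.
Proof. intros i j Hi _. unfold mmul, mid.
 rewrite (rsum_ext _ _ (fun k => if Nat.eq_dec i k then A k j else 0)).
 apply (rsum_delta d i (fun k => A k j)); auto. intros k _. destruct (Nat.eq_dec i k); ring. Qed.
Lemma mmul_id_r A : meq d (mmul d A mid) A.
Proof. intros i j _ Hj. unfold mmul, mid.
 rewrite (rsum_ext _ _ (fun k => if Nat.eq_dec k j then A i k else 0)).
 apply (rsum_delta' d j (fun k => A i k)); auto. intros k _. destruct (Nat.eq_dec k j); ring. Qed.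
Lemma mmul_addl A B C : meq d (mmul d (madd A B) C) (madd (mmul d A C) (mmul d B C)).
Proof. intros i j _ _. unfold mmul, madd. rewrite <- rsum_plus. apply rsum_ext; intros; ring. Qed.
Lemma mmul_addr A B C : meq d (mmul d A (madd B C)) (madd (mmul d A B) (mmul d A C)).
Proof. intros i j _ _. unfold mmul, madd. rewrite <- rsum_plus. apply rsum_ext; intros; ring. Qed.
Lemma mmul_subl A B C : meq d (mmul d (msub A B) C) (msub (mmul d A C) (mmul d B C)).
Proof. intros i j _ _. unfold mmul, msub, madd, mopp. rewrite <- rsum_opp, <- rsum_plus. apply rsum_ext; intros; ring. Qed.
Lemma mmul_subr A B C : meq d (mmul d A (msub B C)) (msub (mmul d A B) (mmul d A C)).
Proof. intros i j _ _. unfold mmul, msub, madd, mopp. rewrite <- rsum_opp, <- rsum_plus. apply rsum_ext; intros; ring. Qed.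
Lemma mmul_scalel c A B : meq d (mmul d (mscale c A) B) (mscale c (mmul d A B)).
Proof. intros i j _ _. unfold mmul, mscale. rewrite <- rsum_scal. apply rsum_ext; intros; ring. Qed.
Lemma mmul_scaler c A B : meq d (mmul d A (mscale c B)) (mscale c (mmul d A B)).
Proof. intros i j _ _. unfold mmul, mscale. rewrite <- rsum_scal. apply rsum_ext; intros; ring. Qed.
Lemma mtr_mmul A B : meq d (mtr (mmul d A B)) (mmul d (mtr B) (mtr A)).
Proof. intros i j _ _. unfold mtr, mmul. apply rsum_ext; intros; ring. Qed.
Lemma mtr_mid : meq d (mtr mid) mid.
Proof. intros i j _ _. unfold mtr, mid. destruct (Nat.eq_dec j i), (Nat.eq_dec i j); subst; auto; congruence. Qed.
Lemma mtr_mtr A : meq d (mtr (mtr A)) A.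
Proof. intros i j _ _; reflexivity. Qed.

Definition commute A B := meq d (mmul d A B) (mmul d B A).

Global Instance commute_proper : Proper (meq d ==> meq d ==> iff) commute.
Proof. intros A A' HA B B' HB. unfold commute. rewrite HA, HB. reflexivity. Qed.

Definition mzero : Mat := fun _ _ => 0.

Lemma mpow_S_r A n : meq d (mpow d A (S n)) (mmul d (mpow d A n) A).
Proof. induction n; simpl. rewrite mmul_id_l, mmul_id_r. reflexivity.
 simpl in IHn. rewrite IHn at 1. rewrite mmul_assoc. reflexivity. Qed.

Lemma commute_pow A B n : commute A B -> commute A (mpow d B n).
Proof. intros H. induction n; simpl; unfold commute in *.
 rewrite mmul_id_l, mmul_id_r; reflexivity.
 rewrite <- mmul_assoc, H, mmul_assoc, IHn, mmul_assoc. reflexivity. Qed.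

Lemma commute_sym A B : commute A B -> commute B A.
Proof. unfold commute; intros; symmetry; auto. Qed.

Definition nrm (A : Mat) := rsum d (fun i => rsum d (fun j => Rabs (A i j))).

Global Instance nrm_proper : Proper (meq d ==> eq) nrm.
Proof. intros A A' H. unfold nrm. apply rsum_ext; intros i Hi. apply rsum_ext; intros j Hj.
 rewrite H; auto. Qed.

Lemma nrm_nonneg A : 0 <= nrm A.
Proof. apply rsum_nonneg; intros; apply rsum_nonneg; intros; apply Rabs_pos. Qed.
Lemma nrm_entry A i j : (i < d)%nat -> (j < d)%nat -> Rabs (A i j) <= nrm A.
Proof. intros Hi Hj. unfold nrm. eapply Rle_trans.
 2:{ apply (rsum_single_le _ _ i Hi). intros; apply rsum_nonneg; intros; apply Rabs_pos. }
 apply (rsum_single_le _ (fun j => Rabs (A i j)) j Hj). intros; apply Rabs_pos. Qed.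
Lemma nrm_add A B : nrm (madd A B) <= nrm A + nrm B.
Proof. unfold nrm, madd. rewrite <- rsum_plus. apply rsum_le; intros i _.
 rewrite <- rsum_plus. apply rsum_le; intros j _. apply Rabs_triang. Qed.
Lemma nrm_opp A : nrm (mopp A) = nrm A.
Proof. unfold nrm, mopp. apply rsum_ext; intros; apply rsum_ext; intros; apply Rabs_Ropp. Qed.
Lemma nrm_sub A B : nrm (msub A B) <= nrm A + nrm B.
Proof. unfold msub. rewrite <- (nrm_opp B). apply nrm_add. Qed.
Lemma nrm_scale c A : nrm (mscale c A) = Rabs c * nrm A.
Proof. unfold nrm, mscale. rewrite <- rsum_scal. apply rsum_ext; intros.
 rewrite <- rsum_scal. apply rsum_ext; intros. apply Rabs_mult. Qed.
Lemma nrm_tr A : nrm (mtr A) = nrm A.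
Proof. unfold nrm, mtr. apply rsum_swap. Qed.
Lemma nrm_mul A B : nrm (mmul d A B) <= nrm A * nrm B.
Proof. unfold nrm, mmul.
 apply Rle_trans with (rsum d (fun i => rsum d (fun j => rsum d (fun k => Rabs (A i k) * Rabs (B k j))))).
 { apply rsum_le; intros; apply rsum_le; intros. eapply Rle_trans; [apply rsum_abs|].
   apply rsum_le; intros. rewrite Rabs_mult; lra. }
 rewrite <- rsum_scal_r. apply rsum_le; intros i _.
 rewrite rsum_swap. rewrite <- rsum_scal_r. apply rsum_le; intros k Hk.
 rewrite rsum_scal. apply Rmult_le_compat_l. apply Rabs_pos.
 apply (rsum_single_le _ (fun k => rsum d (fun j => Rabs (B k j))) k). auto.
 intros; apply rsum_nonneg; intros; apply Rabs_pos.
Qed.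

End M.

End A.
Import A.
Module B.
Open Scope R_scope.
Notation ser a l := (@is_series R_AbsRing R_NormedModule a l).
Notation exser a := (@ex_series R_AbsRing R_NormedModule a).

Lemma sum_f_rsum (a : nat -> R) (n : nat) : sum_f_R0 a n = rsum (S n) a.
Proof. induction n; simpl in *. lra. rewrite IHn. auto. Qed.

Lemma series_rsum (a : nat -> R) (l : R) : ser a l <-> Un_cv (fun N => rsum (S N) a) l.
Proof. rewrite is_series_Reals. unfold infinite_sum, Un_cv.
 split; intros H eps Heps; destruct (H eps Heps) as [N HN]; exists N; intros n Hn;
 specialize (HN n Hn); rewrite sum_f_rsum in *; auto. Qed.

Lemma series_lim (a : nat -> R) (l : R) : ser a l <-> is_lim_seq (fun N => rsum (S N) a) l.
Proof. rewrite series_rsum, is_lim_seq_Reals. tauto. Qed.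

Lemma series_uniq (a : nat -> R) (l1 : R) (l2 : R) : ser a l1 -> ser a l2 -> l1 = l2.
Proof. rewrite !series_rsum. apply UL_sequence. Qed.

Lemma series_ext (a : nat -> R) (b : nat -> R) (l : R) : (forall n, a n = b n) -> ser a l -> ser b l.
Proof. intros H. apply is_series_ext; auto. Qed.

Lemma series_plus (a : nat -> R) (b : nat -> R) (la : R) (lb : R) : ser a la -> ser b lb -> ser (fun n => a n + b n) (la + lb).
Proof. intros. apply (is_series_plus a b la lb); auto. Qed.
Lemma series_scal (c : R) (a : nat -> R) (l : R) : ser a l -> ser (fun n => c * a n) (c * l).
Proof. intros. apply (is_series_scal_l c a l); auto. Qed.
Lemma series_scal_r (c : R) (a : nat -> R) (l : R) : ser a l -> ser (fun n => a n * c) (l * c).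
Proof. intros H. rewrite Rmult_comm. eapply series_ext. 2: apply (series_scal c a l H). intros; simpl; ring. Qed.
Lemma series_opp (a : nat -> R) (l : R) : ser a l -> ser (fun n => - a n) (- l).
Proof. intros. apply (is_series_opp a l); auto. Qed.
Lemma series_minus (a : nat -> R) (b : nat -> R) (la : R) (lb : R) : ser a la -> ser b lb -> ser (fun n => a n - b n) (la - lb).
Proof. intros. apply (is_series_minus a b la lb); auto. Qed.

Lemma series_finite (a : nat -> R) (m : nat) : (forall n, (m <= n)%nat -> a n = 0) -> ser a (rsum m a).
Proof. intros H. rewrite series_lim. apply (is_lim_seq_incr_n _ m).
 eapply is_lim_seq_ext. 2: apply is_lim_seq_const. intros n. simpl.
 induction n. simpl. rewrite (H m) by lia. replace (0+m)%nat with m by lia. lra.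
 replace (S n + m)%nat with (S (n+m)) by lia. simpl. simpl in IHn. rewrite <- IHn. rewrite (H (S (n+m))) by lia. lra. Qed.

Lemma series_rsum_fin n (a : nat -> nat -> R) l : (forall k, (k < n)%nat -> ser (a k) (l k)) ->
  ser (fun m => rsum n (fun k => a k m)) (rsum n l).
Proof. induction n; intros H; simpl.
 - apply (series_finite _ 0). intros; auto.
 - apply series_plus. apply IHn; intros; apply H; lia. apply H; lia. Qed.

Lemma partial_le_series (a : nat -> R) (l : R) (N : nat) : (forall n, 0 <= a n) -> ser a l -> rsum (S N) a <= l.
Proof. intros Hp Hs. rewrite series_lim in Hs. apply (is_lim_seq_incr_n _ N) in Hs.
 assert (Rbar_le (rsum (S N) a) l).
 { eapply is_lim_seq_le. 2: apply is_lim_seq_const. 2: apply Hs. intros n. simpl.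
   induction n. replace (0+N)%nat with N by lia. simpl; lra.
   replace (S n + N)%nat with (S (n+N)) by lia. simpl in *. specialize (Hp (S (n+N))). lra. }
 simpl in H. auto. Qed.

Lemma series_le (a : nat -> R) (b : nat -> R) (la : R) (lb : R) : (forall n, a n <= b n) -> ser a la -> ser b lb -> la <= lb.
Proof. intros H Ha Hb. rewrite series_lim in Ha, Hb. assert (Rbar_le la lb).
 eapply is_lim_seq_le; [|apply Ha|apply Hb]. intros; apply rsum_le; intros; auto. simpl in H0; auto. Qed.

Lemma series_abs_le (a : nat -> R) (b : nat -> R) (la : R) (lb : R) : (forall n, Rabs (a n) <= b n) -> ser a la -> ser b lb -> Rabs la <= lb.
Proof. intros H Ha Hb. rewrite series_lim in Ha, Hb. apply is_lim_seq_abs in Ha.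
 assert (Rbar_le (Rbar_abs la) lb).
 eapply is_lim_seq_le; [|apply Ha|apply Hb]. intros; eapply Rle_trans; [apply rsum_abs|apply rsum_le; intros; auto].
 simpl in H0; auto. Qed.

Lemma ex_series_bound (a : nat -> R) (b : nat -> R) : (forall n, Rabs (a n) <= b n) -> exser b -> exser a.
Proof. intros H Hb. apply ex_series_Rabs.
 assert (Hle : forall n, norm (Rabs (a n)) <= b n).
 { intros n. unfold norm; simpl. unfold abs; simpl. rewrite Rabs_Rabsolu. auto. }
 exact (@ex_series_le R_AbsRing R_CompleteNormedModule _ b Hle Hb). Qed.

Lemma exp_series (x : R) : ser (fun n => x ^ n / INR (fact n)) (exp x).
Proof. generalize (is_exp_Reals x). unfold is_pseries. apply is_series_ext. intros n.
 rewrite pow_n_pow. unfold scal; simpl. unfold mult; simpl. unfold Rdiv. ring. Qed.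

Lemma pow_fact_le_exp (x : R) (n : nat) : 0 <= x -> x ^ n / INR (fact n) <= exp x.
Proof. intros Hx. apply Rle_trans with (rsum (S n) (fun k => x^k/INR(fact k))).
 2: apply (partial_le_series _ _ n).
 simpl. assert (0 <= rsum n (fun k => x ^ k / INR (fact k))). apply rsum_nonneg; intros.
 apply Rdiv_le_0_compat. apply pow_le; auto. apply INR_fact_lt_0. lra.
 intros. apply Rdiv_le_0_compat. apply pow_le; auto. apply INR_fact_lt_0. apply exp_series. Qed.

(* Cauchy product for exponential-type series *)
Definition exptype (a : nat -> R) := exists K c, 0 <= c /\ forall n, Rabs (a n) <= K * c ^ n / INR (fact n).

Lemma exptype_radius (a : nat -> R) : exptype a -> Rbar_lt (Rabs 1) (CV_radius a).
Proof. intros [K [c [Hc H]]]. destruct (CV_radius_bounded a) as [Hub _].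
 assert (Rbar_le 2 (CV_radius a)). apply Hub. exists (Rabs K * exp (2*c)). intros n.
 rewrite Rabs_mult. specialize (H n). rewrite (Rabs_pos_eq (2^n)) by (apply pow_le; lra).
 apply Rle_trans with (K * c ^ n / INR (fact n) * 2 ^ n). apply Rmult_le_compat_r; auto. apply pow_le; lra.
 replace (K * c ^ n / INR (fact n) * 2 ^ n) with (K * ((2*c)^n / INR (fact n))) by (rewrite Rpow_mult_distr; field; apply INR_fact_neq_0).
 eapply Rle_trans. apply Rle_abs. rewrite Rabs_mult. apply Rmult_le_compat_l. apply Rabs_pos.
 rewrite Rabs_pos_eq. apply pow_fact_le_exp; lra. apply Rdiv_le_0_compat. apply pow_le; lra. apply INR_fact_lt_0.
 rewrite Rabs_R1. destruct (CV_radius a); simpl in *; auto; lra. Qed.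

Lemma series_pseries1 (a : nat -> R) (l : R) : ser a l <-> is_pseries a 1 l.
Proof. unfold is_pseries. split; apply is_series_ext; intros n; rewrite pow_n_pow, pow1;
 unfold scal; simpl; unfold mult; simpl; ring. Qed.

Lemma series_mult (a : nat -> R) (b : nat -> R) (la : R) (lb : R) : exptype a -> exptype b -> ser a la -> ser b lb ->
  is_series (fun n => rsum (S n) (fun p => a p * b (n - p)%nat)) (la * lb).
Proof. intros Ea Eb Ha Hb. rewrite series_pseries1 in Ha, Hb.
 generalize (is_pseries_mult a b 1 la lb Ha Hb (exptype_radius a Ea) (exptype_radius b Eb)).
 intros H. rewrite <- series_pseries1 in H. eapply series_ext. 2: apply H.
 intros n. unfold PS_mult. apply sum_f_rsum. Qed.

End B.
Import B.
Module C.
Open Scope R_scope.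

Lemma binom_step (x : nat -> R) n :
 rsum (S (S n)) (fun p => INR (S n) * x p / (INR (fact p) * INR (fact (S n - p)))) =
 rsum (S n) (fun p => x (S p) / (INR (fact p) * INR (fact (n - p)))) +
 rsum (S n) (fun p => x p / (INR (fact p) * INR (fact (n-p)))).
Proof.
 rewrite (rsum_ext _ _ (fun p => INR p * x p / (INR (fact p) * INR (fact (S n - p))) +
    INR (S n - p) * x p / (INR (fact p) * INR (fact (S n - p))))).
 2:{ intros p Hp. rewrite minus_INR by lia. field. split; apply INR_fact_neq_0. }
 rewrite rsum_plus. f_equal.
 - rewrite rsum_shift. cbv beta. change (INR 0) with 0. rewrite Rmult_0_l. unfold Rdiv at 1. rewrite Rmult_0_l, Rplus_0_l.
   apply rsum_ext. intros q Hq. replace (S n - S q)%nat with (n - q)%nat by lia.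
   change (fact (S q)) with (S q * fact q)%nat. rewrite mult_INR. field.
   split; [apply INR_fact_neq_0|split; [apply INR_fact_neq_0| apply not_0_INR; lia]].
 - rewrite rsum_S. cbv beta. replace (S n - S n)%nat with 0%nat by lia. change (INR 0) with 0.
   rewrite Rmult_0_l. unfold Rdiv at 2. rewrite Rmult_0_l, Rplus_0_r.
   apply rsum_ext. intros p Hp. replace (S n - p)%nat with (S (n - p)) by lia.
   change (fact (S (n-p))) with (S (n-p) * fact (n-p))%nat. rewrite mult_INR. field.
   split; [apply INR_fact_neq_0|split; [apply INR_fact_neq_0| apply not_0_INR; lia]].
Qed.

Section E.
Variable d : nat.
Notation meq := (meq d).
Notation mmul := (mmul d).
Notation mpow := (mpow d).
Notation mexp := (mexp d).
Notation nrm := (nrm d).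
Notation commute := (commute d).

Definition ecoef A i j n := mpow A n i j / INR (fact n).

Lemma nrm_mid : nrm mid = INR d.
Proof. unfold nrm. rewrite (rsum_ext _ _ (fun _ => 1)).
 clear. induction d; simpl; auto. rewrite IHn. destruct n; simpl; lra.
 intros i Hi. unfold mid. rewrite (rsum_ext _ _ (fun j => if Nat.eq_dec i j then 1 else 0)).
 apply (rsum_delta d i (fun _ => 1)); auto.
 intros j _. destruct (Nat.eq_dec i j). apply Rabs_R1. apply Rabs_R0. Qed.

Global Instance mpow_proper : Proper (meq ==> eq ==> meq) mpow.
Proof. intros A B H n m <-. induction n; simpl. reflexivity. apply mmul_proper; auto. Qed.

Lemma nrm_pow_S A n : nrm (mpow A (S n)) <= nrm A ^ (S n).
Proof. induction n. simpl. rewrite mmul_id_r. lra.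
 change (mpow A (S (S n))) with (mmul A (mpow A (S n))). eapply Rle_trans. apply nrm_mul.
 change (nrm A ^ S (S n)) with (nrm A * nrm A ^ (S n)). apply Rmult_le_compat_l; auto. apply nrm_nonneg. Qed.

Lemma nrm_pow A n : nrm (mpow A n) <= (INR d + 1) * nrm A ^ n.
Proof. destruct n. simpl. rewrite nrm_mid. lra.
 eapply Rle_trans. apply nrm_pow_S. assert (0 <= nrm A ^ S n) by (apply pow_le; apply nrm_nonneg).
 assert (0 <= INR d) by apply pos_INR. nra. Qed.

Lemma ecoef_exptype A i j : (i < d)%nat -> (j < d)%nat -> exptype (ecoef A i j).
Proof. intros Hi Hj. exists (INR d + 1), (nrm A). split. apply nrm_nonneg. intros n.
 unfold ecoef. unfold Rdiv. rewrite Rabs_mult. rewrite (Rabs_pos_eq (/ _)).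
 apply Rmult_le_compat_r. left; apply Rinv_0_lt_compat, INR_fact_lt_0.
 eapply Rle_trans. apply (nrm_entry d _ i j Hi Hj). apply nrm_pow.
 left; apply Rinv_0_lt_compat, INR_fact_lt_0. Qed.

Lemma exptype_ex a : exptype a -> exser a.
Proof. intros [K [c [Hc H]]]. apply (ex_series_bound _ (fun n => K * (c ^ n / INR (fact n)))).
 intros n. rewrite H. unfold Rdiv; rewrite Rmult_assoc; lra.
 eexists. apply series_scal. apply exp_series. Qed.

Lemma mexp_series A i j : (i < d)%nat -> (j < d)%nat -> ser (ecoef A i j) (mexp A i j).
Proof. intros Hi Hj. destruct (exptype_ex _ (ecoef_exptype A i j Hi Hj)) as [l Hl].
 assert (Hl' := Hl). rewrite series_rsum in Hl'.
 unfold mexp, Defs.mexp.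
 match goal with |- context [epsilon ?i ?P] => assert (HP : P (epsilon i P)) end.
 { apply epsilon_spec. exists l. exact Hl'. }
 replace (epsilon _ _) with l. exact Hl. eapply UL_sequence. apply Hl'. apply HP. Qed.

Lemma mexp_unique A i j l : (i < d)%nat -> (j < d)%nat -> ser (ecoef A i j) l -> mexp A i j = l.
Proof. intros. eapply series_uniq. apply mexp_series; auto. auto. Qed.

Global Instance mexp_proper : Proper (meq ==> meq) mexp.
Proof. intros A B H i j Hi Hj. apply mexp_unique; auto.
 eapply series_ext. 2: apply mexp_series; auto. intros n. unfold ecoef. rewrite (mpow_proper A B H n n eq_refl i j Hi Hj); auto. Qed.

Lemma mexp_zero Z : meq Z mzero -> meq (mexp Z) mid.
Proof. intros HZ i j Hi Hj. apply mexp_unique; auto.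
 replace (mid i j) with (rsum 1 (ecoef Z i j)). apply series_finite.
 intros n Hn. destruct n. lia. unfold ecoef. simpl. unfold Defs.mmul.
 rewrite (rsum_ext _ _ (fun _ => 0)). rewrite rsum_zero. lra.
 intros k Hk. rewrite HZ; auto. unfold mzero; ring.
 simpl. unfold ecoef. simpl. lra. Qed.

Lemma mpow_tr A n : meq (mpow (mtr A) n) (mtr (mpow A n)).
Proof. induction n; simpl. symmetry; apply mtr_mid. rewrite IHn.
 change (Defs.mmul d) with mmul. rewrite <- mtr_mmul.
 rewrite <- mpow_S_r. simpl. reflexivity. Qed.

Lemma mexp_tr A : meq (mtr (mexp A)) (mexp (mtr A)).
Proof. intros i j Hi Hj. unfold mtr at 1. symmetry. apply mexp_unique; auto.
 eapply series_ext. 2: apply mexp_series; auto. intros n. unfold ecoef.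
 rewrite mpow_tr; auto. Qed.

Lemma mexp_mul_l X A i j : (i < d)%nat -> (j < d)%nat ->
  ser (fun n => mmul X (mpow A n) i j / INR (fact n)) (mmul X (mexp A) i j).
Proof. intros Hi Hj. unfold Defs.mmul at 2.
 eapply series_ext. 2:{ apply series_rsum_fin. intros k Hk.
   apply series_scal with (c := X i k). apply mexp_series; auto. }
 intros n. simpl. unfold Defs.mmul. unfold ecoef. unfold Rdiv; rewrite <- rsum_scal_r. apply rsum_ext. intros; ring. Qed.

Lemma mexp_mul_r X A i j : (i < d)%nat -> (j < d)%nat ->
  ser (fun n => mmul (mpow A n) X i j / INR (fact n)) (mmul (mexp A) X i j).
Proof. intros Hi Hj. unfold Defs.mmul at 2.
 eapply series_ext. 2:{ apply series_rsum_fin. intros k Hk.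
   apply series_scal_r with (c := X k j). apply mexp_series; auto. }
 intros n. simpl. unfold Defs.mmul. unfold ecoef. unfold Rdiv; rewrite <- rsum_scal_r. apply rsum_ext. intros; ring. Qed.

Lemma commute_exp X A : commute X A -> commute X (mexp A).
Proof. intros H i j Hi Hj. eapply series_uniq. apply mexp_mul_l; auto.
 eapply series_ext. 2: apply mexp_mul_r; auto. intros n.
 rewrite (commute_pow _ X A n H); auto. Qed.

Definition Pm A B p q := mmul (mpow A p) (mpow B q).

Lemma Pm_A A B p q : meq (mmul A (Pm A B p q)) (Pm A B (S p) q).
Proof. unfold Pm. rewrite <- mmul_assoc. reflexivity. Qed.
Lemma Pm_B A B p q : commute A B -> meq (mmul B (Pm A B p q)) (Pm A B p (S q)).
Proof. intros H. unfold Pm. rewrite <- mmul_assoc.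
 assert (H' : commute B (mpow A p)) by (apply commute_pow, commute_sym; auto).
 unfold A.commute in H'. rewrite H', mmul_assoc. reflexivity. Qed.

Definition Qm A B n : Mat := fun i j =>
  rsum (S n) (fun p => Pm A B p (n - p) i j / (INR (fact p) * INR (fact (n - p)))).

Lemma Qm_binom A B n : commute A B -> meq (Qm A B n) (mscale (/ INR (fact n)) (mpow (madd A B) n)).
Proof. intros HAB. induction n.
 - intros i j Hi Hj. unfold Qm, mscale, Pm. simpl. rewrite (mmul_id_l d mid i j Hi Hj). field.
 - assert (Hstep : meq (mscale (INR (S n)) (Qm A B (S n))) (mmul (madd A B) (Qm A B n))).
   { intros i j Hi Hj. unfold mscale, Qm.
     rewrite (mmul_addl d A B _ i j Hi Hj). unfold madd.
     rewrite <- rsum_scal.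
     rewrite (rsum_ext _ _ (fun p => INR (S n) * Pm A B p (S n - p) i j / (INR (fact p) * INR (fact (S n - p))))) by (intros; unfold Rdiv; ring). rewrite (binom_step (fun p => Pm A B p (S n - p) i j) n).
     f_equal.
     + unfold Defs.mmul. rewrite (rsum_ext d _ (fun k => rsum (S n) (fun p => A i k * Pm A B p (n-p) k j / (INR (fact p) * INR (fact (n - p)))))).
       rewrite rsum_swap. apply rsum_ext. intros p Hp.
       replace (S n - S p)%nat with (n - p)%nat by lia.
       rewrite <- (Pm_A A B p (n-p) i j Hi Hj). unfold Defs.mmul. unfold Rdiv; rewrite <- rsum_scal_r. apply rsum_ext; intros; ring.
       intros k Hk. rewrite <- rsum_scal. apply rsum_ext; intros; unfold Rdiv; ring.
     + unfold Defs.mmul. rewrite (rsum_ext d _ (fun k => rsum (S n) (fun p => B i k * Pm A B p (n-p) k j / (INR (fact p) * INR (fact (n - p)))))).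
       rewrite rsum_swap. apply rsum_ext. intros p Hp.
       replace (S n - p)%nat with (S (n - p))%nat by lia.
       rewrite <- (Pm_B A B p (n-p) HAB i j Hi Hj). unfold Defs.mmul. unfold Rdiv; rewrite <- rsum_scal_r. apply rsum_ext; intros; ring.
       intros k Hk. rewrite <- rsum_scal. apply rsum_ext; intros; unfold Rdiv; ring. }
   intros i j Hi Hj.
   assert (E := Hstep i j Hi Hj). unfold mscale in E |- *.
   rewrite (mmul_proper d _ _ (reflexivity (madd A B)) _ _ IHn i j Hi Hj) in E.
   rewrite (mmul_scaler d _ _ _ i j Hi Hj) in E. unfold mscale in E.
   change (mpow (madd A B) (S n) i j) with (mmul (madd A B) (mpow (madd A B) n) i j).
   change (fact (S n)) with (S n * fact n)%nat. rewrite mult_INR.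
   assert (INR (S n) <> 0) by (apply not_0_INR; lia). assert (INR (fact n) <> 0) by apply INR_fact_neq_0.
   apply (Rmult_eq_reg_l (INR (S n))); auto. rewrite E. field; auto.
Qed.

Lemma mexp_add A B : commute A B -> meq (mmul (mexp A) (mexp B)) (mexp (madd A B)).
Proof. intros HAB i j Hi Hj. symmetry. apply mexp_unique; auto.
 unfold Defs.mmul at 1.
 eapply series_ext. 2:{ apply series_rsum_fin. intros k Hk.
   exact (series_mult _ _ _ _ (ecoef_exptype A i k Hi Hk) (ecoef_exptype B k j Hk Hj) (mexp_series A i k Hi Hk) (mexp_series B k j Hk Hj)). }
 intros n. cbv beta.
 assert (Q := Qm_binom A B n HAB i j Hi Hj). unfold mscale in Q. unfold ecoef.
 replace (mpow (madd A B) n i j / INR (fact n)) with (Qm A B n i j) by (rewrite Q; unfold Rdiv; ring).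
 unfold Qm. rewrite rsum_swap. apply rsum_ext. intros p Hp. unfold Pm, Defs.mmul.
 unfold Rdiv at 3; rewrite <- rsum_scal_r. apply rsum_ext. intros k Hk. unfold ecoef. field. split; apply INR_fact_neq_0. Qed.

Lemma lim_rsum n (u : nat -> nat -> R) (l : nat -> R) :
  (forall k, (k < n)%nat -> is_lim_seq (fun m => u m k) (l k)) ->
  is_lim_seq (fun m => rsum n (u m)) (rsum n l).
Proof. induction n; intros H; simpl. apply is_lim_seq_const.
 apply is_lim_seq_plus'. apply IHn; intros; apply H; lia. apply H; lia. Qed.

Lemma nrm_series (V : Mat) (c : nat -> nat -> nat -> R) (q : nat -> R) (Q : R) :
  (forall i j, (i < d)%nat -> (j < d)%nat -> ser (c i j) (V i j)) ->
  (forall n, rsum d (fun i => rsum d (fun j => Rabs (c i j n))) <= q n) ->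
  ser q Q -> nrm V <= Q.
Proof. intros Hc Hb Hq. rewrite series_lim in Hq.
 assert (HL : is_lim_seq (fun N => rsum d (fun i => rsum d (fun j => Rabs (rsum (S N) (c i j))))) (nrm V)).
 { unfold A.nrm. apply (lim_rsum d (fun N i => rsum d (fun j => Rabs (rsum (S N) (c i j))))).
   intros i Hi. apply (lim_rsum d (fun N j => Rabs (rsum (S N) (c i j)))). intros j Hj.
   apply (is_lim_seq_abs _ (V i j)). rewrite <- series_lim. auto. }
 assert (Rbar_le (nrm V) Q). eapply is_lim_seq_le; [|apply HL|apply Hq].
 intros N. eapply Rle_trans. apply rsum_le. intros i _. apply rsum_le. intros j _. apply rsum_abs.
 eapply Rle_trans. 2:{ apply rsum_le. intros n _. apply Hb. }
 rewrite (rsum_swap (S N) d (fun n i => rsum d (fun j => Rabs (c i j n)))).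
 apply rsum_le. intros i _. rewrite (rsum_swap (S N) d (fun n j => Rabs (c i j n))). lra.
 simpl in H; auto. Qed.

Definition mpart H m : Mat := fun i j => rsum m (fun k => ecoef H i j k).

Lemma exp_tail H m : (1 <= m)%nat -> nrm (msub (mexp H) (mpart H m)) <= exp (nrm H) - rsum m (fun k => nrm H ^ k / INR (fact k)).
Proof. intros Hm. apply (nrm_series _ (fun i j n => if Nat.ltb n m then 0 else ecoef H i j n)
   (fun n => if Nat.ltb n m then 0 else nrm H ^ n / INR (fact n))).
 - intros i j Hi Hj.
   replace (msub (mexp H) (mpart H m) i j) with (mexp H i j - rsum m (fun n => if Nat.ltb n m then ecoef H i j n else 0)).
   2:{ unfold msub, madd, mopp, mpart. rewrite (rsum_ext m (fun n => if Nat.ltb n m then ecoef H i j n else 0) (ecoef H i j)). unfold Rminus. reflexivity. intros k Hk. destruct (Nat.ltb_spec k m); auto; lia. }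
   eapply series_ext. 2:{ apply series_minus. apply (mexp_series H i j Hi Hj).
     apply (series_finite (fun n => if Nat.ltb n m then ecoef H i j n else 0) m).
     intros n Hn. destruct (Nat.ltb_spec n m); auto; lia. }
   intros n. simpl. destruct (Nat.ltb_spec n m); ring.
 - intros n. destruct (Nat.ltb_spec n m).
   + rewrite (rsum_ext _ _ (fun _ => 0)). rewrite rsum_zero; lra. intros. rewrite (rsum_ext _ _ (fun _ => 0)). apply rsum_zero. intros; apply Rabs_R0.
   + unfold ecoef. unfold Rdiv. rewrite (rsum_ext _ _ (fun i => rsum d (fun j => Rabs (mpow H n i j)) * / INR (fact n))).
     rewrite rsum_scal_r. apply Rmult_le_compat_r. left; apply Rinv_0_lt_compat, INR_fact_lt_0.
     destruct n. lia. apply nrm_pow_S.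
     intros i _. rewrite <- rsum_scal_r. apply rsum_ext. intros j _. rewrite Rabs_mult.
     rewrite (Rabs_pos_eq (/ _)); auto. left; apply Rinv_0_lt_compat, INR_fact_lt_0.
 - replace (exp (nrm H) - rsum m (fun k => nrm H ^ k / INR (fact k))) with (exp (nrm H) - rsum m (fun n => if Nat.ltb n m then nrm H ^ n / INR (fact n) else 0)).
   2:{ rewrite (rsum_ext m (fun n => if Nat.ltb n m then nrm H ^ n / INR (fact n) else 0) (fun k => nrm H ^ k / INR (fact k))). reflexivity. intros k Hk. destruct (Nat.ltb_spec k m); auto; lia. }
   eapply series_ext. 2:{ apply series_minus. apply (exp_series (nrm H)).
     apply (series_finite (fun n => if Nat.ltb n m then nrm H ^ n / INR (fact n) else 0) m).
     intros n Hn. destruct (Nat.ltb_spec n m); auto; lia. }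
   intros n. simpl. destruct (Nat.ltb_spec n m); ring.
Qed.

Lemma mpart1 H : meq (mpart H 1) mid.
Proof. intros i j Hi Hj. unfold mpart, ecoef. simpl. lra. Qed.
Lemma mpart2 H : meq (mpart H 2) (madd mid H).
Proof. intros i j Hi Hj. unfold mpart, ecoef, madd. simpl rsum.
 rewrite (mmul_id_r d H i j Hi Hj). simpl. lra. Qed.

Lemma exp_tail1 H : nrm (msub (mexp H) mid) <= exp (nrm H) - 1.
Proof. rewrite <- (mpart1 H). eapply Rle_trans. apply exp_tail; lia. simpl. lra. Qed.
Lemma exp_tail2 H : nrm (msub (msub (mexp H) mid) H) <= exp (nrm H) - 1 - nrm H.
Proof. assert (E : meq (msub (msub (mexp H) mid) H) (msub (mexp H) (mpart H 2))).
 { rewrite mpart2. intros i j Hi Hj. unfold msub, madd, mopp. ring. }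
 rewrite E. eapply Rle_trans. apply exp_tail; lia. simpl. lra. Qed.

Lemma commute_refl A : commute A A.
Proof. unfold A.commute. reflexivity. Qed.
Lemma commute_opp_l A B : commute A B -> commute (mopp A) B.
Proof. unfold A.commute. intros H i j Hi Hj. unfold Defs.mmul, mopp.
 rewrite (rsum_ext _ _ (fun k => - (A i k * B k j))) by (intros; ring). rewrite rsum_opp.
 rewrite (rsum_ext _ (fun k => B i k * - A k j) (fun k => - (B i k * A k j))) by (intros; ring). rewrite rsum_opp.
 f_equal. apply H; auto. Qed.

Lemma mexp_inv_l A : meq (mmul (mexp (mopp A)) (mexp A)) mid.
Proof. rewrite mexp_add. apply mexp_zero. intros i j _ _. unfold madd, mopp, mzero. ring.
 apply commute_opp_l, commute_refl. Qed.
Lemma mexp_inv_r A : meq (mmul (mexp A) (mexp (mopp A))) mid.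
Proof. rewrite mexp_add. apply mexp_zero. intros i j _ _. unfold madd, mopp, mzero. ring.
 apply commute_sym, commute_opp_l, commute_refl. Qed.

End E.

End C.
Import C.
Module D.
Open Scope R_scope.

Section D.
Variable d : nat.
Notation meq := (meq d).
Notation mmul := (mmul d).
Notation mpow := (mpow d).
Notation mexp := (mexp d).
Notation nrm := (nrm d).
Notation commute := (commute d).

Lemma commute_add_l A B X : commute A X -> commute B X -> commute (madd A B) X.
Proof. unfold A.commute; intros H1 H2. rewrite mmul_addl, mmul_addr, H1, H2. reflexivity. Qed.
Lemma commute_scale_l c A X : commute A X -> commute (mscale c A) X.
Proof. unfold A.commute; intros H1. rewrite mmul_scalel, mmul_scaler, H1. reflexivity. Qed.
Lemma commute_sub_l A B X : commute A X -> commute B X -> commute (msub A B) X.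
Proof. unfold A.commute; intros H1 H2. rewrite mmul_subl, mmul_subr, H1, H2. reflexivity. Qed.
Lemma commute_mul_l A B X : commute A X -> commute B X -> commute (mmul A B) X.
Proof. unfold A.commute; intros H1 H2. rewrite mmul_assoc, H2, <- mmul_assoc, H1, mmul_assoc. reflexivity. Qed.
Lemma commute_mid_l X : commute mid X.
Proof. unfold A.commute. rewrite mmul_id_l, mmul_id_r. reflexivity. Qed.
Lemma commute_tr A B : commute A B -> commute (mtr A) (mtr B).
Proof. unfold A.commute; intros H. rewrite <- !mtr_mmul, H. reflexivity. Qed.
Lemma commute_exp_l A X : commute A X -> commute (mexp A) X.
Proof. intros H. apply commute_sym, commute_exp, commute_sym; auto. Qed.

Lemma mexp_commute_add A B : commute A B -> meq (mmul (mexp A) (mexp B)) (mmul (mexp B) (mexp A)).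
Proof. intros H. apply commute_exp, commute_exp_l; auto. Qed.

Lemma mmul_zero_r A B : meq B mzero -> meq (mmul A B) mzero.
Proof. intros H i j Hi Hj. unfold Defs.mmul, mzero. rewrite (rsum_ext _ _ (fun _ => 0)). apply rsum_zero.
 intros k Hk. rewrite H; auto. unfold mzero; ring. Qed.

Lemma Fmat_normal T C : normal d C -> meq (Fmat d T C) (mexp (mscale T C)).
Proof. intros HC. unfold Fmat. rewrite mexp_add.
 apply mexp_proper. intros i j _ _. unfold madd, mscale, msub, madd, mopp, mtr. ring.
 apply commute_scale_l. apply commute_sym. apply commute_scale_l. apply commute_sym.
 apply commute_sub_l. exact HC. apply commute_refl. Qed.

Lemma sub_zero_eq A B : meq (msub A B) mzero -> meq A B.
Proof. intros H i j Hi Hj. specialize (H i j Hi Hj). unfold msub, madd, mopp, mzero in H. lra. Qed.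
Lemma eq_sub_zero A B : meq A B -> meq (msub A B) mzero.
Proof. intros H i j Hi Hj. unfold msub, madd, mopp, mzero. rewrite H; auto. ring. Qed.

Lemma part_i T Rm C : normal d C ->
  (char_eq d T 0 Rm C <-> meq (mexp (mscale T C)) Rm).
Proof. intros HC. unfold char_eq. rewrite (Fmat_normal T C HC).
 rewrite (mexp_tr d (mscale T C)). split.
 - intros H. symmetry. apply sub_zero_eq.
   assert (E : meq (msub Rm (mexp (mscale T C))) (mmul (mexp (mopp (mtr (mscale T C)))) (mmul (mexp (mtr (mscale T C))) (msub Rm (mexp (mscale T C)))))).
   { rewrite <- mmul_assoc, mexp_inv_l, mmul_id_l. reflexivity. }
   rewrite E, <- H. apply mmul_zero_r. intros i j _ _. unfold mscale, mzero; ring.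
 - intros H. rewrite H. rewrite mmul_zero_r. intros i j _ _. unfold mscale, mzero; ring.
   apply eq_sub_zero; reflexivity. Qed.

End D.

End D.
Import D.
Module E.
Open Scope R_scope.

Section S.
Variable d : nat.
Notation meq := (meq d).
Notation mmul := (mmul d).
Notation mexp := (mexp d).
Notation nrm := (nrm d).
Notation commute := (commute d).
Variable L : Mat.
Hypothesis HL : normal d L.

Definition inS X := forall Y, commute Y L -> commute Y (mtr L) -> commute Y X.

Global Instance inS_proper : Proper (meq ==> iff) inS.
Proof. intros X X' H. unfold inS. split; intros HX Y H1 H2; [rewrite <- H|rewrite H]; auto. Qed.

Lemma inS_L : inS L. Proof. intros Y H1 H2; auto. Qed.
Lemma inS_Lt : inS (mtr L). Proof. intros Y H1 H2; auto. Qed.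
Lemma inS_mid : inS mid. Proof. intros Y _ _. apply commute_sym, commute_mid_l. Qed.
Lemma inS_add X Y : inS X -> inS Y -> inS (madd X Y).
Proof. intros HX HY Z H1 H2. apply commute_sym, commute_add_l; apply commute_sym; auto. Qed.
Lemma inS_scale c X : inS X -> inS (mscale c X).
Proof. intros HX Z H1 H2. apply commute_sym, commute_scale_l; apply commute_sym; auto. Qed.
Lemma inS_sub X Y : inS X -> inS Y -> inS (msub X Y).
Proof. intros HX HY Z H1 H2. apply commute_sym, commute_sub_l; apply commute_sym; auto. Qed.
Lemma inS_opp X : inS X -> inS (mopp X).
Proof. intros HX Z H1 H2. apply commute_sym, commute_opp_l; apply commute_sym; auto. Qed.
Lemma inS_mul X Y : inS X -> inS Y -> inS (mmul X Y).
Proof. intros HX HY Z H1 H2. apply commute_sym, commute_mul_l; apply commute_sym; auto. Qed.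
Lemma inS_exp X : inS X -> inS (mexp X).
Proof. intros HX Z H1 H2. apply commute_exp; auto. Qed.
Lemma inS_tr X : inS X -> inS (mtr X).
Proof. intros HX Z H1 H2.
 assert (H3 : commute (mtr Z) L). { generalize (commute_tr _ _ _ H2). intros H. rewrite (mtr_mtr d L) in H. exact H. }
 assert (H4 : commute (mtr Z) (mtr L)). { apply commute_tr. auto. }
 generalize (commute_tr _ _ _ (HX _ H3 H4)). intros H. rewrite (mtr_mtr d Z) in H. exact H. Qed.
Lemma inS_comm_L X : inS X -> commute X L /\ commute X (mtr L).
Proof. intros HX. split; apply commute_sym; apply HX. apply commute_refl. apply HL.
 apply commute_sym, HL. apply commute_refl. Qed.
Lemma inS_comm X Y : inS X -> inS Y -> commute X Y.
Proof. intros HX HY. destruct (inS_comm_L X HX). apply HY; auto. Qed.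
Lemma inS_normal X : inS X -> normal d X.
Proof. intros HX. apply (inS_comm X (mtr X)); auto. apply inS_tr; auto. Qed.

Lemma lim_mmul_r Y (Xs : nat -> Mat) (X : Mat) i j : (i < d)%nat -> (j < d)%nat ->
  (forall i j, (i < d)%nat -> (j < d)%nat -> is_lim_seq (fun n => Xs n i j) (X i j)) ->
  is_lim_seq (fun n => mmul Y (Xs n) i j) (mmul Y X i j).
Proof. intros Hi Hj H. unfold Defs.mmul. apply (lim_rsum d (fun n k => Y i k * Xs n k j)).
 intros k Hk. generalize (is_lim_seq_scal_l _ (Y i k) (X k j) (H k j Hk Hj)). simpl. auto. Qed.
Lemma lim_mmul_l Y (Xs : nat -> Mat) (X : Mat) i j : (i < d)%nat -> (j < d)%nat ->
  (forall i j, (i < d)%nat -> (j < d)%nat -> is_lim_seq (fun n => Xs n i j) (X i j)) ->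
  is_lim_seq (fun n => mmul (Xs n) Y i j) (mmul X Y i j).
Proof. intros Hi Hj H. unfold Defs.mmul. apply (lim_rsum d (fun n k => Xs n i k * Y k j)).
 intros k Hk. generalize (is_lim_seq_scal_l _ (Y k j) (X i k) (H i k Hi Hk)). simpl. intros H'.
 eapply is_lim_seq_ext. 2: { rewrite Rmult_comm. exact H'. } intros; simpl; ring. Qed.

Lemma inS_lim (Xs : nat -> Mat) (X : Mat) : (forall n, inS (Xs n)) ->
  (forall i j, (i < d)%nat -> (j < d)%nat -> is_lim_seq (fun n => Xs n i j) (X i j)) -> inS X.
Proof. intros HS Hl Y H1 H2 i j Hi Hj.
 assert (E1 := lim_mmul_r Y Xs X i j Hi Hj Hl). assert (E2 := lim_mmul_l Y Xs X i j Hi Hj Hl).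
 apply is_lim_seq_unique in E1. apply is_lim_seq_unique in E2.
 rewrite (Lim_seq_ext _ (fun n => mmul (Xs n) Y i j)) in E1. rewrite E1 in E2. injection E2; auto.
 intros n. apply (HS n Y H1 H2); auto. Qed.

End S.

Section F.
Variable d : nat.
Notation meq := (meq d).
Notation mmul := (mmul d).
Notation mexp := (mexp d).
Notation nrm := (nrm d).
Notation commute := (commute d).
Notation inS := (inS d).
Variable L : Mat.
Hypothesis HL : normal d L.
Variable T : R.
Hypothesis HT : 0 < T.
Variable Rm : Mat.
Hypothesis HR : meq (mexp L) Rm.

Definition Ninv := mmul (mexp (mopp (mtr L))) (mexp (mopp L)).
Definition Mm := mmul Rm (mtr Rm).

Lemma Rm_tr : meq (mtr Rm) (mexp (mtr L)).
Proof. rewrite <- HR. apply mexp_tr. Qed.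

Lemma M_Ninv : meq (mmul Mm Ninv) mid.
Proof. unfold Mm, Ninv. rewrite Rm_tr, <- HR.
 rewrite mmul_assoc, <- (mmul_assoc d (mexp (mtr L))), mexp_inv_r, mmul_id_l, mexp_inv_r. reflexivity. Qed.
Lemma Ninv_M : meq (mmul Ninv Mm) mid.
Proof. unfold Mm, Ninv. rewrite Rm_tr, <- HR.
 rewrite mmul_assoc, <- (mmul_assoc d (mexp (mopp L))), mexp_inv_l, mmul_id_l, mexp_inv_l. reflexivity. Qed.

Lemma inS_Rm : inS L Rm.
Proof. rewrite <- HR. apply inS_exp, inS_L. Qed.
Lemma inS_Ninv : inS L Ninv.
Proof. unfold Ninv. apply inS_mul; apply inS_exp, inS_opp. apply inS_Lt. apply inS_L. Qed.
Lemma inS_Mm : inS L Mm.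
Proof. unfold Mm. apply inS_mul. apply inS_Rm. apply inS_tr, inS_Rm. Qed.

Lemma minv_eq : meq (minv d Mm) Ninv.
Proof. unfold minv. match goal with |- meq (epsilon ?i ?P) _ => assert (HP : P (epsilon i P)) end.
 { apply epsilon_spec. exists Ninv. apply M_Ninv. }
 set (B := epsilon _ _) in *. 
 rewrite <- (mmul_id_l d B). rewrite <- Ninv_M. rewrite mmul_assoc, HP, mmul_id_r. reflexivity. Qed.

Definition CX X := madd (mscale (/T) L) X.
Definition phi Y := msub (msub (mexp Y) mid) Y.
Definition eX X := mexp (mscale (-T) (mtr X)).
Definition G lam X := mscale (/T) (msub (mscale (-lam) (mmul Ninv (mmul (eX X) (CX X)))) (phi (mscale T X))).

Lemma fix_char lam X : inS L X -> meq (G lam X) X -> char_eq d T lam Rm (CX X).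
Proof. intros HX Hfix.
 set (E := mexp (mscale T X)).
 assert (Hf : meq (msub E mid) (mscale (-lam) (mmul Ninv (mmul (eX X) (CX X))))).
 { intros i j Hi Hj. specialize (Hfix i j Hi Hj). unfold G, phi, mscale, msub, madd, mopp in Hfix.
   unfold msub, madd, mopp, mscale. fold E in Hfix.
   apply (Rmult_eq_compat_l T) in Hfix. field_simplify in Hfix; [|lra]. change (mexp (fun i j : nat => T * X i j) i j) with (E i j) in Hfix. lra. }
 assert (HC : inS L (CX X)). { unfold CX. apply inS_add; auto. apply inS_scale, inS_L. }
 unfold char_eq. rewrite (Fmat_normal d T _ (inS_normal d L HL _ HC)).
 assert (HF : meq (mexp (mscale T (CX X))) (mmul Rm E)).
 { rewrite <- HR. unfold E. rewrite mexp_add. apply mexp_proper. intros i j _ _.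
   cbv [mscale CX madd]. field. lra.
   apply (inS_comm d L HL). apply inS_L. apply inS_scale; auto. }
 rewrite HF, mtr_mmul.
 assert (H1 : meq (msub Rm (mmul Rm E)) (mmul Rm (mscale (-1) (msub E mid)))).
 { rewrite mmul_scaler, mmul_subr, mmul_id_r. intros i j _ _. unfold mscale, msub, madd, mopp. ring. }
 rewrite H1, Hf, !mmul_scaler.
 assert (H2 : meq (mmul (mmul (mtr E) (mtr Rm)) (mmul Rm (mmul Ninv (mmul (eX X) (CX X))))) (CX X)).
 { assert (Et : meq (mtr E) (mexp (mtr (mscale T X)))) by (apply mexp_tr).
   assert (Ee : meq (eX X) (mexp (mopp (mtr (mscale T X))))).
   { unfold eX. apply mexp_proper. intros i j _ _. unfold mscale, mopp, mtr. ring. }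
   assert (Hc : commute (mtr Rm) Rm). { apply (inS_comm d L HL). apply inS_tr, inS_Rm. apply inS_Rm. }
   assert (Hc' : meq (mmul (mtr Rm) Rm) (mmul Rm (mtr Rm))) by exact Hc.
   rewrite mmul_assoc, <- (mmul_assoc d (mtr Rm)), Hc'.
   change (mmul Rm (mtr Rm)) with Mm.
   rewrite <- (mmul_assoc d Mm), M_Ninv, mmul_id_l, <- mmul_assoc, Et, Ee, mexp_inv_r, mmul_id_l.
   reflexivity. }
 rewrite H2. intros i j _ _. unfold mscale. ring. Qed.

End F.

End E.
Import E.
Module F.
Open Scope R_scope.

Lemma exp_mono x y : x <= y -> exp x <= exp y.
Proof. intros [H|H]. left; apply exp_increasing; auto. subst; lra. Qed.
Lemma exp_ge1 x : 0 <= x -> 1 <= exp x.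
Proof. intros H. rewrite <- exp_0. apply exp_mono; auto. Qed.
Lemma exp_m1_le x : 0 <= x -> exp x - 1 <= x * exp x.
Proof. intros H. assert (H1 := exp_ineq1_le (-x)). assert (H2 : exp (-x) * exp x = 1).
 rewrite <- exp_plus. replace (-x + x) with 0 by ring. apply exp_0.
 assert (0 < exp x) by apply exp_pos. nra. Qed.
Lemma exp_m1x_le x : 0 <= x -> exp x - 1 - x <= x ^ 2 * exp x.
Proof. intros H. assert (H1 := exp_m1_le x H). assert (1 <= exp x) by (apply exp_ge1; auto). nra. Qed.

Section Est.
Variable d : nat.
Notation meq := (meq d).
Notation mmul := (mmul d).
Notation mexp := (mexp d).
Notation nrm := (nrm d).
Notation commute := (commute d).

Lemma nrm_zero Z : meq Z mzero -> nrm Z = 0.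
Proof. intros H. unfold A.nrm. rewrite (rsum_ext _ _ (fun _ => 0)). apply rsum_zero.
 intros i Hi. rewrite (rsum_ext _ _ (fun _ => 0)). apply rsum_zero. intros j Hj. rewrite H; auto. unfold mzero. apply Rabs_R0. Qed.
Lemma nrm0_meq Z : nrm Z <= 0 -> meq Z mzero.
Proof. intros H i j Hi Hj. assert (H1 := nrm_entry d Z i j Hi Hj). unfold mzero.
 assert (Rabs (Z i j) = 0) by (assert (0 <= Rabs (Z i j)) by apply Rabs_pos; lra).
 apply Rabs_eq_0 in H0. auto. Qed.
Lemma nrm_tri A B C : nrm (msub A C) <= nrm (msub A B) + nrm (msub B C).
Proof. assert (E : meq (msub A C) (madd (msub A B) (msub B C))) by (intros i j _ _; unfold msub, madd, mopp; ring).
 rewrite E. apply nrm_add. Qed.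
Lemma nrm_exp A : nrm (mexp A) <= INR d + exp (nrm A) - 1.
Proof. assert (E : meq (mexp A) (madd (msub (mexp A) mid) mid)) by (intros i j _ _; unfold msub, madd, mopp; ring).
 rewrite E. eapply Rle_trans. apply nrm_add. rewrite nrm_mid. generalize (exp_tail1 d A). lra. Qed.

Lemma exp_diff A B : commute A B -> meq (msub (mexp A) (mexp B)) (mmul (mexp B) (msub (mexp (msub A B)) mid)).
Proof. intros H. rewrite mmul_subr, mmul_id_r, mexp_add. apply msub_proper; [|reflexivity].
 apply mexp_proper. intros i j _ _; cbv [madd msub mopp]; ring.
 apply commute_sym. apply commute_sub_l. exact H. apply commute_refl. Qed.

Lemma nrm_exp_diff A B : commute A B -> nrm (msub (mexp A) (mexp B)) <= nrm (mexp B) * (exp (nrm (msub A B)) - 1).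
Proof. intros H. rewrite (exp_diff A B H). eapply Rle_trans. apply nrm_mul.
 apply Rmult_le_compat_l. apply nrm_nonneg. apply exp_tail1. Qed.

Lemma phi_lip A B : commute A B ->
  nrm (msub (msub (msub (mexp A) mid) A) (msub (msub (mexp B) mid) B)) <=
  nrm (msub A B) * (nrm B + nrm (msub A B)) * exp (nrm B + nrm (msub A B)).
Proof. intros HAB. set (H := msub A B).
 assert (HE : meq (mexp A) (mmul (mexp B) (mexp H))).
 { rewrite mexp_add. apply mexp_proper. intros i j _ _; unfold H; cbv [madd msub mopp]; ring.
   apply commute_sym. apply commute_sub_l. exact HAB. apply commute_refl. }
 assert (E : meq (msub (msub (msub (mexp A) mid) A) (msub (msub (mexp B) mid) B))
    (madd (mmul (msub (mexp B) mid) (msub (mexp H) mid)) (msub (msub (mexp H) mid) H))).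
 { rewrite mmul_subl, !mmul_subr, mmul_id_l, mmul_id_r, mmul_id_l. intros i j Hi Hj.
   cbv [madd msub mopp]. rewrite (HE i j Hi Hj). unfold H; cbv [madd msub mopp]. ring. }
 rewrite E. eapply Rle_trans. apply nrm_add.
 eapply Rle_trans. apply Rplus_le_compat. apply nrm_mul. apply exp_tail2.
 set (b := nrm B). set (h := nrm H).
 assert (0 <= b) by apply nrm_nonneg. assert (0 <= h) by apply nrm_nonneg.
 assert (Hb := exp_tail1 d B). assert (Hh := exp_tail1 d H). fold b in Hb. fold h in Hh.
 assert (0 <= nrm (msub (mexp B) mid)) by apply nrm_nonneg.
 assert (0 <= nrm (msub (mexp H) mid)) by apply nrm_nonneg.
 eapply Rle_trans. apply Rplus_le_compat_r. apply Rmult_le_compat; eauto.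
 assert (E1 := exp_m1_le b H0). assert (E2 := exp_m1_le h H1). assert (E3 := exp_m1x_le h H1).
 rewrite exp_plus. assert (1 <= exp b) by (apply exp_ge1; auto). assert (1 <= exp h) by (apply exp_ge1; auto).
 assert (0 <= exp b - 1) by lra. assert (0 <= exp h - 1) by lra.
 apply Rle_trans with (b * exp b * (h * exp h) + h ^ 2 * exp h).
 apply Rplus_le_compat; auto. apply Rmult_le_compat; auto.
 assert (0 <= b * exp b * h * exp h) by (repeat apply Rmult_le_pos; lra).
 assert (h ^ 2 * exp h <= h^2 * exp h * exp b). { assert (0 <= h^2 * exp h) by (apply Rmult_le_pos; nra). nra. }
 nra. Qed.

End Est.

End F.
Import F.
Module G.
Open Scope R_scope.

Section Con.
Variable d : nat.
Notation meq := (meq d).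
Notation mmul := (mmul d).
Notation mexp := (mexp d).
Notation nrm := (nrm d).
Notation commute := (commute d).
Variable L : Mat.
Hypothesis HL : normal d L.
Variable T : R.
Hypothesis HT : 0 < T.
Notation inS := (inS d L).
Notation GG := (G d L T).
Notation eXX := (eX d T).
Notation CC := (CX L T).
Notation NN := (Ninv d L).
Notation ph := (phi d).

Definition a0 := nrm L / T.
Definition E0 := INR d + exp T.
Definition K2 := E0 * (T * exp (2*T) * (a0+1) + 1).
Definition nN := nrm NN.
Definition rr := Rmin 1 (/(12 * T * exp (3*T))).
Definition lam1 := T / (4 * (nN * K2 + 1)).
Definition c0 := nN * E0 * a0 / T.
Definition lam2 := rr / (2 * (c0 + 1)).
Definition delta := Rmin lam1 lam2.
Definition K3 := nN * E0 * (a0 + 1) / T.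
Definition PP X := mmul NN (mmul (eXX X) (CC X)).

Lemma a0_pos : 0 <= a0. Proof. unfold a0. apply Rdiv_le_0_compat. apply nrm_nonneg. lra. Qed.
Lemma E0_pos : 1 <= E0. Proof. unfold E0. assert (0 <= INR d) by apply pos_INR. assert (1 <= exp T) by (apply exp_ge1; lra). lra. Qed.
Lemma K2_pos : 0 <= K2. Proof. unfold K2. generalize E0_pos a0_pos (exp_pos (2*T)); intros. apply Rmult_le_pos. lra.
 assert (0 <= T * exp (2*T) * (a0+1)) by (repeat apply Rmult_le_pos; lra). lra. Qed.
Lemma nN_pos : 0 <= nN. Proof. apply nrm_nonneg. Qed.
Lemma c0_pos : 0 <= c0. Proof. unfold c0. generalize E0_pos a0_pos nN_pos; intros. apply Rdiv_le_0_compat; [|lra].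
 apply Rmult_le_pos; [apply Rmult_le_pos|]; lra. Qed.

Lemma K3_pos : 0 <= K3. Proof. unfold K3. generalize E0_pos a0_pos nN_pos; intros. apply Rdiv_le_0_compat; [|lra].
 apply Rmult_le_pos; [apply Rmult_le_pos|]; lra. Qed.
Lemma rr_pos : 0 < rr. Proof. unfold rr. apply Rmin_pos. lra. apply Rinv_0_lt_compat.
 generalize (exp_pos (3*T)); intros. repeat apply Rmult_lt_0_compat; lra. Qed.
Lemma rr_le1 : rr <= 1. Proof. apply Rmin_l. Qed.
Lemma rr_small : 3 * T * rr * exp (3*T) <= /4.
Proof. assert (H := Rmin_r 1 (/(12 * T * exp (3*T)))). fold rr in H.
 generalize (exp_pos (3*T)); intros. assert (0 < 12 * T * exp (3*T)) by (repeat apply Rmult_lt_0_compat; lra).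
 apply Rle_trans with (3 * T * exp (3*T) * / (12 * T * exp (3 * T))).
 replace (3 * T * rr * exp (3 * T)) with (3 * T * exp (3*T) * rr) by ring.
 apply Rmult_le_compat_l; auto. left; repeat apply Rmult_lt_0_compat; lra.
 right. field. split; lra. Qed.
Lemma delta_pos : 0 < delta.
Proof. unfold delta, lam1, lam2. generalize nN_pos K2_pos c0_pos rr_pos; intros. apply Rmin_pos.
 apply Rdiv_lt_0_compat. lra. assert (0 <= nN * K2) by (apply Rmult_le_pos; lra). lra.
 apply Rdiv_lt_0_compat. lra. lra. Qed.
Lemma delta_lam1 : delta <= lam1. Proof. apply Rmin_l. Qed.
Lemma delta_lam2 : delta <= lam2. Proof. apply Rmin_r. Qed.

Lemma inS_eX X : inS X -> inS (eXX X).
Proof. intros H. unfold eX. apply inS_exp, inS_scale, inS_tr; auto. Qed.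
Lemma inS_CX X : inS X -> inS (CC X).
Proof. intros H. unfold CX. apply inS_add; auto. apply inS_scale, inS_L. Qed.
Lemma inS_PP X : inS X -> inS (PP X).
Proof. intros H. unfold PP. apply inS_mul. apply inS_Ninv. apply inS_mul. apply inS_eX; auto. apply inS_CX; auto. Qed.
Lemma inS_G lam X : inS X -> inS (GG lam X).
Proof. intros H. unfold G. apply inS_scale, inS_sub. apply inS_scale. apply inS_PP; auto.
 unfold phi. apply inS_sub. apply inS_sub. apply inS_exp, inS_scale; auto. apply inS_mid. apply inS_scale; auto. Qed.

Lemma nrm_eX X : nrm X <= 1 -> nrm (eXX X) <= E0.
Proof. intros H. unfold eX. eapply Rle_trans. apply nrm_exp. rewrite nrm_scale, nrm_tr.
 rewrite Rabs_Ropp, Rabs_pos_eq by lra. unfold E0. assert (exp (T * nrm X) <= exp T).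
 apply exp_mono. generalize (nrm_nonneg d X); intros; nra. lra. Qed.
Lemma nrm_CX X : nrm (CC X) <= a0 + nrm X.
Proof. unfold CX. eapply Rle_trans. apply nrm_add. rewrite nrm_scale. unfold a0.
 rewrite Rabs_pos_eq. right; unfold Rdiv; ring. left; apply Rinv_0_lt_compat; lra. Qed.

Lemma psi_lip X Y : inS X -> inS Y -> nrm X <= 1 -> nrm Y <= 1 ->
  nrm (msub (mmul (eXX X) (CC X)) (mmul (eXX Y) (CC Y))) <= K2 * nrm (msub X Y).
Proof. intros HX HY HnX HnY.
 assert (E : meq (msub (mmul (eXX X) (CC X)) (mmul (eXX Y) (CC Y)))
      (madd (mmul (msub (eXX X) (eXX Y)) (CC X)) (mmul (eXX Y) (msub X Y)))).
 { assert (E1 : meq (msub X Y) (msub (CC X) (CC Y))) by (intros i j _ _; unfold CX; cbv [msub madd mopp mscale]; ring).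
   rewrite E1, mmul_subl, mmul_subr. intros i j _ _; cbv [msub madd mopp]; ring. }
 rewrite E. eapply Rle_trans. apply nrm_add.
 set (h := nrm (msub X Y)).
 assert (Hh : 0 <= h) by apply nrm_nonneg.
 assert (Hh2 : h <= 2) by (unfold h; generalize (nrm_sub d X Y); lra).
 assert (HEY := nrm_eX Y HnY).
 assert (Hd : nrm (msub (eXX X) (eXX Y)) <= E0 * (T * h * exp (2 * T))).
 { unfold eX at 1 2. eapply Rle_trans. apply nrm_exp_diff.
   apply (inS_comm d L HL); apply inS_scale, inS_tr; auto.
   assert (E2 : meq (msub (mscale (- T) (mtr X)) (mscale (- T) (mtr Y))) (mscale (-T) (mtr (msub X Y))))
     by (intros i j _ _; cbv [msub madd mopp mscale mtr]; ring).
   rewrite E2, nrm_scale, nrm_tr, Rabs_Ropp, Rabs_pos_eq by lra. fold h.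
   apply Rmult_le_compat. apply nrm_nonneg. assert (1 <= exp (T*h)) by (apply exp_ge1; nra). lra. fold (eXX Y). auto.
   eapply Rle_trans. apply exp_m1_le. nra. apply Rmult_le_compat_l. nra. apply exp_mono. nra. }
 eapply Rle_trans. apply Rplus_le_compat. apply nrm_mul. apply nrm_mul.
 assert (HCX := nrm_CX X). assert (0 <= nrm (CC X)) by apply nrm_nonneg.
 assert (0 <= nrm (msub (eXX X) (eXX Y))) by apply nrm_nonneg. assert (0 <= nrm (eXX Y)) by apply nrm_nonneg.
 generalize E0_pos a0_pos (exp_pos (2*T)); intros.
 apply Rle_trans with (E0 * (T * h * exp (2 * T)) * (a0 + 1) + E0 * h).
 apply Rplus_le_compat. apply Rmult_le_compat; auto. lra. apply Rmult_le_compat; auto; unfold h; lra.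
 unfold K2. right; ring. Qed.

Lemma phi_lip2 X Y : inS X -> inS Y -> nrm X <= rr -> nrm Y <= rr ->
  nrm (msub (ph (mscale T X)) (ph (mscale T Y))) <= T * nrm (msub X Y) * (3 * T * rr) * exp (3 * T).
Proof. intros HX HY HnX HnY. unfold phi. eapply Rle_trans. apply phi_lip.
 apply (inS_comm d L HL); apply inS_scale; auto.
 assert (E : meq (msub (mscale T X) (mscale T Y)) (mscale T (msub X Y))) by (intros i j _ _; cbv [msub madd mopp mscale]; ring).
 rewrite E, !nrm_scale, Rabs_pos_eq by lra.
 set (h := nrm (msub X Y)). assert (Hh : 0 <= h) by apply nrm_nonneg.
 assert (Hh2 : h <= 2 * rr) by (unfold h; generalize (nrm_sub d X Y); lra).
 assert (0 <= nrm Y) by apply nrm_nonneg. generalize rr_le1 rr_pos; intros.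
 assert (T * nrm Y + T * h <= 3 * T * rr) by nra.
 assert (exp (T * nrm Y + T * h) <= exp (3 * T)) by (apply exp_mono; nra).
 assert (0 <= T * nrm Y + T * h) by nra.
 apply Rmult_le_compat. apply Rmult_le_pos; [apply Rmult_le_pos|]; lra. left; apply exp_pos. apply Rmult_le_compat_l. apply Rmult_le_pos; lra. lra. auto. Qed.

Lemma G_diff lam mu X Y : nrm (msub (GG lam X) (GG mu Y)) <=
  / T * (nrm (msub (mscale (-lam) (PP X)) (mscale (-mu) (PP Y))) + nrm (msub (ph (mscale T X)) (ph (mscale T Y)))).
Proof. assert (E : meq (msub (GG lam X) (GG mu Y)) (mscale (/T) (msub (msub (mscale (-lam) (PP X)) (mscale (-mu) (PP Y))) (msub (ph (mscale T X)) (ph (mscale T Y)))))).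
 { intros i j _ _. unfold G, PP. cbv [msub madd mopp mscale]. ring. }
 rewrite E, nrm_scale, Rabs_pos_eq. apply Rmult_le_compat_l. left; apply Rinv_0_lt_compat; lra.
 apply nrm_sub. left; apply Rinv_0_lt_compat; lra. Qed.

Lemma G_lip lam X Y : 0 <= lam <= lam1 -> inS X -> inS Y -> nrm X <= rr -> nrm Y <= rr ->
  nrm (msub (GG lam X) (GG lam Y)) <= / 2 * nrm (msub X Y).
Proof. intros Hl HX HY HnX HnY. eapply Rle_trans. apply G_diff.
 generalize rr_le1 rr_pos rr_small K2_pos nN_pos; intros.
 assert (E : meq (msub (mscale (-lam) (PP X)) (mscale (-lam) (PP Y))) (mscale (-lam) (mmul NN (msub (mmul (eXX X) (CC X)) (mmul (eXX Y) (CC Y)))))).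
 { rewrite mmul_subr. intros i j _ _. unfold PP. cbv [msub madd mopp mscale]. ring. }
 rewrite E, nrm_scale, Rabs_Ropp, Rabs_pos_eq by lra.
 set (h := nrm (msub X Y)). assert (Hh : 0 <= h) by apply nrm_nonneg.
 assert (HA : nrm (mmul NN (msub (mmul (eXX X) (CC X)) (mmul (eXX Y) (CC Y)))) <= nN * (K2 * h)).
 { eapply Rle_trans. apply nrm_mul. apply Rmult_le_compat_l. apply nrm_nonneg. apply psi_lip; auto; lra. }
 assert (HB := phi_lip2 X Y HX HY HnX HnY). fold h in HB.
 assert (HC : lam * (nN * K2) <= T / 4).
 { destruct Hl as [Hl0 Hl1]. unfold lam1 in Hl1. assert (0 <= nN * K2) by (apply Rmult_le_pos; lra).
   apply Rle_trans with (T / (4 * (nN * K2 + 1)) * (nN * K2)). apply Rmult_le_compat_r; lra.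
   apply Rmult_le_reg_r with (4 * (nN * K2 + 1) / T). apply Rdiv_lt_0_compat; lra.
   field_simplify; try lra; try nra. }
 apply Rle_trans with (/T * (lam * (nN * (K2 * h)) + T * h * (3 * T * rr) * exp (3 * T))).
 apply Rmult_le_compat_l. left; apply Rinv_0_lt_compat; lra. apply Rplus_le_compat; auto.
 apply Rmult_le_compat_l; lra.
 apply Rle_trans with (/T * (T / 4 * h + T * h * /4)).
 apply Rmult_le_compat_l. left; apply Rinv_0_lt_compat; lra. apply Rplus_le_compat.
 replace (lam * (nN * (K2 * h))) with (lam * (nN * K2) * h) by ring. apply Rmult_le_compat_r; auto.
 replace (T * h * (3 * T * rr) * exp (3 * T)) with (T * h * (3 * T * rr * exp (3 * T))) by ring.
 apply Rmult_le_compat_l; nra.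
 right; field; lra. Qed.

Lemma phi_zero : meq (ph (mscale T mzero)) mzero.
Proof. unfold phi. rewrite (mexp_zero d (mscale T mzero)). intros i j _ _; cbv [msub madd mopp mscale mzero]; ring.
 intros i j _ _; cbv [mscale mzero]; ring. Qed.

Lemma G0_bound lam : 0 <= lam -> nrm (GG lam mzero) <= lam * c0.
Proof. intros Hl. assert (E : meq (GG lam mzero) (mscale (- lam / T) (PP mzero))).
 { unfold G. rewrite phi_zero. intros i j _ _. unfold PP. cbv [msub madd mopp mscale mzero]. field. lra. }
 rewrite E, nrm_scale. unfold PP.
 assert (Hz : nrm mzero = 0) by (apply nrm_zero; reflexivity).
 assert (H1 : nrm (mmul NN (mmul (eXX mzero) (CC mzero))) <= nN * (E0 * a0)).
 { eapply Rle_trans. apply nrm_mul. apply Rmult_le_compat_l. apply nrm_nonneg.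
   eapply Rle_trans. apply nrm_mul. apply Rmult_le_compat. apply nrm_nonneg. apply nrm_nonneg.
   apply nrm_eX. lra. generalize (nrm_CX mzero). lra. }
 assert (HA : Rabs (- lam / T) = lam / T).
 { unfold Rdiv. rewrite Rabs_mult, Rabs_Ropp, (Rabs_pos_eq lam), (Rabs_pos_eq (/T)); auto. left; apply Rinv_0_lt_compat; lra. }
 rewrite HA. unfold c0. apply Rle_trans with (lam / T * (nN * (E0 * a0))).
 apply Rmult_le_compat_l; auto. apply Rdiv_le_0_compat; lra. right; field; lra. Qed.

Lemma inS_zero : inS mzero.
Proof. intros Y _ _ i j Hi Hj. unfold Defs.mmul, mzero.
 rewrite (rsum_ext d (fun k => Y i k * 0) (fun _ => 0)) by (intros; ring).
 rewrite (rsum_ext d (fun k => 0 * Y k j) (fun _ => 0)) by (intros; ring). reflexivity. Qed.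

Lemma G_ball lam X : 0 <= lam < delta -> inS X -> nrm X <= rr -> nrm (GG lam X) <= rr.
Proof. intros Hl HX Hn. generalize delta_lam1 delta_lam2 c0_pos rr_pos; intros.
 assert (E : nrm (GG lam X) = nrm (msub (GG lam X) mzero)) by (apply nrm_proper; intros i j _ _; cbv [msub madd mopp mzero]; ring).
 rewrite E. eapply Rle_trans. apply (nrm_tri d _ (GG lam mzero)).
 assert (E2 : nrm (msub (GG lam mzero) mzero) = nrm (GG lam mzero)) by (apply nrm_proper; intros i j _ _; cbv [msub madd mopp mzero]; ring).
 rewrite E2. assert (Hz : nrm mzero = 0) by (apply nrm_zero; reflexivity).
 assert (H3 : nrm (msub (GG lam X) (GG lam mzero)) <= / 2 * nrm (msub X mzero)).
 { apply G_lip; auto. lra. apply inS_zero. lra. }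
 assert (E3 : nrm (msub X mzero) = nrm X) by (apply nrm_proper; intros i j _ _; cbv [msub madd mopp mzero]; ring).
 rewrite E3 in H3. assert (H4 := G0_bound lam (proj1 Hl)).
 assert (lam * c0 <= rr / 2).
 { apply Rle_trans with (lam2 * (c0 + 1)). apply Rmult_le_compat; lra. unfold lam2. right; field. lra. }
 lra. Qed.

Lemma G_lam_diff lam mu X : inS X -> nrm X <= 1 -> nrm (msub (GG lam X) (GG mu X)) <= Rabs (lam - mu) * K3.
Proof. intros HX Hn. eapply Rle_trans. apply G_diff.
 assert (E : meq (msub (ph (mscale T X)) (ph (mscale T X))) mzero) by (intros i j _ _; cbv [msub madd mopp mzero]; ring).
 rewrite (nrm_zero d _ E), Rplus_0_r.
 assert (E2 : meq (msub (mscale (-lam) (PP X)) (mscale (-mu) (PP X))) (mscale (mu - lam) (PP X))) by (intros i j _ _; cbv [msub madd mopp mscale]; ring).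
 rewrite E2, nrm_scale. unfold PP.
 assert (H1 : nrm (mmul NN (mmul (eXX X) (CC X))) <= nN * (E0 * (a0 + 1))).
 { eapply Rle_trans. apply nrm_mul. apply Rmult_le_compat_l. apply nrm_nonneg.
   eapply Rle_trans. apply nrm_mul. apply Rmult_le_compat. apply nrm_nonneg. apply nrm_nonneg.
   apply nrm_eX; auto. generalize (nrm_CX X). lra. }
 rewrite Rabs_minus_sym. unfold K3. apply Rle_trans with (/T * (Rabs (lam - mu) * (nN * (E0 * (a0 + 1))))).
 apply Rmult_le_compat_l. left; apply Rinv_0_lt_compat; lra. apply Rmult_le_compat_l; auto. apply Rabs_pos.
 right; field; lra. Qed.

End Con.

End G.
Import G.
Module H.
Open Scope R_scope.

Lemma small_geom x c : (forall n, x <= c * (/2) ^ n) -> x <= 0.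
Proof. intros H. destruct (Rle_lt_dec x 0) as [|Hx]; auto. exfalso.
 set (c' := Rabs c + 1). assert (Hc' : 0 < c') by (unfold c'; generalize (Rabs_pos c); lra).
 destruct (pow_lt_1_zero (/2) ltac:(rewrite Rabs_pos_eq; lra) (x / c') ltac:(apply Rdiv_lt_0_compat; lra)) as [N HN].
 specialize (HN N (le_n N)). specialize (H N). rewrite Rabs_pos_eq in HN by (apply pow_le; lra).
 assert (c * (/2)^N <= c' * (/2)^N). { apply Rmult_le_compat_r. apply pow_le; lra. unfold c'. generalize (Rle_abs c); lra. }
 assert (c' * (/ 2) ^ N < x). { apply Rmult_lt_compat_l with (r := c') in HN; auto. field_simplify in HN; lra. }
 lra. Qed.

Section It.
Variable d : nat.
Notation meq := (meq d).
Notation mmul := (mmul d).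
Notation mexp := (mexp d).
Notation nrm := (nrm d).
Variable L : Mat.
Hypothesis HL : normal d L.
Variable T : R.
Hypothesis HT : 0 < T.
Notation inS := (inS d L).
Notation GG := (G d L T).
Notation rr := (rr T).
Notation delta := (delta d L T).

Fixpoint Xs lam n := match n with O => mzero | S m => GG lam (Xs lam m) end.

Lemma nrm_msub_sym A B : nrm (msub A B) = nrm (msub B A).
Proof. rewrite <- (nrm_opp d (msub B A)). apply nrm_proper. intros i j _ _; cbv [msub madd mopp]; ring. Qed.
Lemma nrm_msub0 A : nrm (msub A mzero) = nrm A.
Proof. apply nrm_proper. intros i j _ _; cbv [msub madd mopp mzero]; ring. Qed.

Section L.
Variable lam : R.
Hypothesis Hl : 0 <= lam < delta.

Lemma It1 n : inS (Xs lam n) /\ nrm (Xs lam n) <= rr.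
Proof. induction n; simpl. split. apply inS_zero. rewrite (nrm_zero d mzero) by reflexivity. generalize (rr_pos T HT); lra.
 destruct IHn. split. apply inS_G; auto. apply G_ball; auto. Qed.

Lemma It2 n : nrm (msub (Xs lam (S n)) (Xs lam n)) <= (/2)^n * rr.
Proof. induction n. simpl. rewrite nrm_msub0. rewrite Rmult_1_l. apply G_ball; auto. apply inS_zero.
 rewrite (nrm_zero d mzero) by reflexivity. generalize (rr_pos T HT); lra.
 change (Xs lam (S (S n))) with (GG lam (Xs lam (S n))). change (Xs lam (S n)) with (GG lam (Xs lam n)) at 2.
 destruct (It1 n), (It1 (S n)). eapply Rle_trans. apply G_lip; auto.
 generalize (delta_lam1 d L T); lra. simpl in IHn |- *. lra. Qed.

Lemma It3 k n : nrm (msub (Xs lam (k + n)) (Xs lam n)) <= 2 * rr * (/2)^n - 2 * rr * (/2)^(k+n).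
Proof. induction k. simpl. rewrite (nrm_zero d) by (intros i j _ _; cbv [msub madd mopp mzero]; ring). lra.
 eapply Rle_trans. apply (nrm_tri d _ (Xs lam (k + n))). change (S k + n)%nat with (S (k + n)).
 generalize (It2 (k+n)); intros H. simpl in H. simpl. lra. Qed.

Lemma It3' m n : (n <= m)%nat -> nrm (msub (Xs lam m) (Xs lam n)) <= 2 * rr * (/2)^n.
Proof. intros H. replace m with ((m - n) + n)%nat by lia. eapply Rle_trans. apply It3.
 assert (0 <= rr) by (generalize (rr_pos T HT); lra). assert (0 <= (/2)^(m - n + n)) by (apply pow_le; lra). nra. Qed.

Lemma Xs_cauchy i j : (i < d)%nat -> (j < d)%nat -> ex_lim_seq_cauchy (fun n => Xs lam n i j).
Proof. intros Hi Hj eps. assert (Hr := rr_pos T HT).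
 destruct (pow_lt_1_zero (/2) ltac:(rewrite Rabs_pos_eq; lra) (eps / (2 * rr + 1)) ltac:(apply Rdiv_lt_0_compat; [apply cond_pos| lra])) as [N HN].
 exists N. intros n m Hn Hm.
 assert (Hb : forall p q, (N <= p)%nat -> (p <= q)%nat -> Rabs (Xs lam q i j - Xs lam p i j) < eps).
 { intros p q Hp Hq. eapply Rle_lt_trans. apply (nrm_entry d (msub (Xs lam q) (Xs lam p)) i j Hi Hj).
   eapply Rle_lt_trans. apply It3'; auto. specialize (HN p Hp). rewrite Rabs_pos_eq in HN by (apply pow_le; lra).
   assert (HN' : (2*rr+1) * (/2)^p < eps).
   { apply Rmult_lt_compat_l with (r := 2*rr+1) in HN; [|lra].
     replace ((2*rr+1) * (eps / (2*rr+1))) with (pos eps) in HN by (field; lra). exact HN. }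
   assert (0 <= (/2)^p) by (apply pow_le; lra). nra. }
 destruct (Compare_dec.le_lt_dec n m). rewrite Rabs_minus_sym. apply Hb; auto. apply Hb; auto; lia. Qed.

Definition Xf : Mat := fun i j => real (Lim_seq (fun n => Xs lam n i j)).

Lemma Xf_lim i j : (i < d)%nat -> (j < d)%nat -> is_lim_seq (fun n => Xs lam n i j) (Xf i j).
Proof. intros Hi Hj. unfold Xf. apply Lim_seq_correct'. apply ex_lim_seq_cauchy_corr. apply Xs_cauchy; auto. Qed.

End L.

Lemma nrm_lim (U : nat -> Mat) (V : Mat) c :
  (forall i j, (i < d)%nat -> (j < d)%nat -> is_lim_seq (fun m => U m i j) (V i j)) ->
  (forall m, nrm (U m) <= c) -> nrm V <= c.
Proof. intros Hl Hb. assert (HL' : is_lim_seq (fun m => nrm (U m)) (nrm V)).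
 { unfold A.nrm. apply (lim_rsum d (fun m i => rsum d (fun j => Rabs (U m i j)))). intros i Hi.
   apply (lim_rsum d (fun m j => Rabs (U m i j))). intros j Hj. apply (is_lim_seq_abs _ (V i j)). auto. }
 assert (Rbar_le (nrm V) c). eapply is_lim_seq_le; [|apply HL'|apply is_lim_seq_const]. auto.
 simpl in H; auto. Qed.

Section L2.
Variable lam : R.
Hypothesis Hl : 0 <= lam < delta.

Lemma Xf_ball : inS (Xf lam) /\ nrm (Xf lam) <= rr.
Proof. split. apply (inS_lim d L (Xs lam)). intros n; apply (It1 lam Hl n). apply Xf_lim; auto.
 apply (nrm_lim (Xs lam)). apply Xf_lim; auto. intros m; apply (It1 lam Hl m). Qed.

Lemma Xf_close n : nrm (msub (Xs lam n) (Xf lam)) <= 2 * rr * (/2)^n.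
Proof. apply (nrm_lim (fun m => msub (Xs lam n) (Xs lam (m + n)))).
 intros i j Hi Hj. unfold msub, madd, mopp. apply is_lim_seq_plus'. apply is_lim_seq_const.
 apply (is_lim_seq_opp _ (Xf lam i j)). apply (is_lim_seq_incr_n (fun m => Xs lam m i j) n). apply Xf_lim; auto.
 intros m. rewrite nrm_msub_sym. apply It3'; auto; lia. Qed.

Lemma Xf_fix : meq (GG lam (Xf lam)) (Xf lam).
Proof. apply sub_zero_eq. apply nrm0_meq. apply (small_geom _ (2 * rr)). intros n.
 destruct Xf_ball as [HS Hn]. destruct (It1 lam Hl n) as [HS' Hn'].
 eapply Rle_trans. apply (nrm_tri d _ (Xs lam (S n))).
 assert (H1 : nrm (msub (GG lam (Xf lam)) (GG lam (Xs lam n))) <= / 2 * nrm (msub (Xf lam) (Xs lam n))).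
 { apply G_lip; auto. generalize (delta_lam1 d L T); lra. }
 change (Xs lam (S n)) with (GG lam (Xs lam n)) at 1.
 assert (H2 := Xf_close n). assert (H3 := Xf_close (S n)). rewrite nrm_msub_sym in H2.
 simpl in H3. simpl. set (q := rr * (/2)^n) in *.
 replace (2 * rr * (/ 2) ^ n) with (2 * q) in * by (unfold q; ring).
 replace (2 * rr * (/ 2 * (/ 2) ^ n)) with q in * by (unfold q; field). lra. Qed.

Lemma Xf_B1 : nrm (Xf lam) <= 2 * lam * c0 d L T.
Proof. destruct Xf_ball as [HS Hn].
 assert (E : nrm (Xf lam) = nrm (GG lam (Xf lam))) by (apply nrm_proper; symmetry; apply Xf_fix).
 assert (T1 : nrm (GG lam (Xf lam)) <= nrm (msub (GG lam (Xf lam)) (GG lam mzero)) + nrm (GG lam mzero)).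
 { rewrite <- (nrm_msub0 (GG lam (Xf lam))), <- (nrm_msub0 (GG lam mzero)). apply nrm_tri. }
 assert (H1 : nrm (msub (GG lam (Xf lam)) (GG lam mzero)) <= / 2 * nrm (msub (Xf lam) mzero)).
 { apply G_lip; auto. generalize (delta_lam1 d L T); lra. apply inS_zero.
   rewrite (nrm_zero d mzero) by reflexivity. generalize (rr_pos T HT); lra. }
 rewrite nrm_msub0 in H1. assert (H2 := G0_bound d L T HT lam (proj1 Hl)). lra. Qed.

End L2.

Lemma Xf_B2 lam mu : 0 <= lam < delta -> 0 <= mu < delta ->
  nrm (msub (Xf lam) (Xf mu)) <= 2 * K3 d L T * Rabs (lam - mu).
Proof. intros Hl Hm. destruct (Xf_ball lam Hl) as [HS1 Hn1]. destruct (Xf_ball mu Hm) as [HS2 Hn2].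
 assert (E : meq (msub (Xf lam) (Xf mu)) (msub (GG lam (Xf lam)) (GG mu (Xf mu)))).
 { rewrite (Xf_fix lam Hl), (Xf_fix mu Hm). reflexivity. }
 assert (E' : nrm (msub (Xf lam) (Xf mu)) = nrm (msub (GG lam (Xf lam)) (GG mu (Xf mu)))) by (apply nrm_proper; exact E).
 assert (T1 := nrm_tri d (GG lam (Xf lam)) (GG lam (Xf mu)) (GG mu (Xf mu))).
 assert (H1 : nrm (msub (GG lam (Xf lam)) (GG lam (Xf mu))) <= / 2 * nrm (msub (Xf lam) (Xf mu))).
 { apply G_lip; auto. generalize (delta_lam1 d L T); lra. }
 assert (H2 : nrm (msub (GG lam (Xf mu)) (GG mu (Xf mu))) <= Rabs (lam - mu) * K3 d L T).
 { apply G_lam_diff; auto. generalize (rr_le1 T); lra. }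
 generalize (K3_pos d L T HT) (Rabs_pos (lam - mu)); intros. lra. Qed.

End It.

End H.
Import H.
Module I.
Open Scope R_scope.

Section Fin.
Variable d : nat.
Notation meq := (meq d).
Notation mmul := (mmul d).
Notation mexp := (mexp d).
Notation nrm := (nrm d).
Variable L : Mat.
Hypothesis HL : normal d L.
Variable T : R.
Hypothesis HT : 0 < T.
Notation GG := (G d L T).
Notation NN := (Ninv d L).

Definition Kq := 2 * nN d L * K2 d L T * c0 d L T / T + 4 * T * (c0 d L T)^2 * exp T.

Lemma G0_eq lam : meq (GG lam mzero) (mscale (- (lam / T^2)) (mmul NN L)).
Proof. unfold G. rewrite (phi_zero d T).
 assert (E1 : meq (eX d T mzero) mid). { unfold eX. apply mexp_zero. intros i j _ _; cbv [mscale mtr mzero]; ring. }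
 rewrite E1, mmul_id_l. unfold CX.
 assert (E2 : meq (madd (mscale (/ T) L) mzero) (mscale (/T) L)) by (intros i j _ _; cbv [madd mscale mzero]; ring).
 rewrite E2, mmul_scaler. intros i j _ _. cbv [mscale msub madd mopp mzero]. field. lra. Qed.

Lemma Xf_B3 lam : 0 <= lam < delta d L T ->
  nrm (madd (Xf d L T lam) (mscale (lam / T^2) (mmul NN L))) <= Kq * lam ^ 2.
Proof. intros Hl. destruct (Xf_ball d L HL T HT lam Hl) as [HS Hn].
 assert (HB1 := Xf_B1 d L HL T HT lam Hl). set (X := Xf d L T lam) in *.
 assert (E : meq (madd X (mscale (lam / T^2) (mmul NN L))) (msub (GG lam X) (GG lam mzero))).
 { assert (HF : meq (GG lam X) X) by apply (Xf_fix d L HL T HT lam Hl).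
   rewrite G0_eq, HF. intros i j _ _. cbv [madd msub mopp mscale]. ring. }
 rewrite E. eapply Rle_trans. apply G_diff; auto.
 set (x := nrm X) in *. assert (Hx0 : 0 <= x) by apply nrm_nonneg.
 generalize (rr_le1 T) (nN_pos d L) (K2_pos d L T HT) (c0_pos d L T HT); intros.
 assert (Hz : nrm mzero = 0) by (apply nrm_zero; reflexivity).
 assert (HA : nrm (msub (mscale (- lam) (PP d L T X)) (mscale (- lam) (PP d L T mzero))) <= lam * (nN d L * (K2 d L T * x))).
 { assert (E2 : meq (msub (mscale (- lam) (PP d L T X)) (mscale (- lam) (PP d L T mzero)))
      (mscale (-lam) (mmul NN (msub (mmul (eX d T X) (CX L T X)) (mmul (eX d T mzero) (CX L T mzero)))))).
   { rewrite mmul_subr. intros i j _ _. unfold PP. cbv [msub madd mopp mscale]. ring. }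
   rewrite E2, nrm_scale, Rabs_Ropp, Rabs_pos_eq by lra. apply Rmult_le_compat_l. lra.
   eapply Rle_trans. apply nrm_mul. apply Rmult_le_compat_l. apply nrm_nonneg.
   eapply Rle_trans. apply psi_lip; auto. apply inS_zero. fold x; lra. rewrite Hz; lra.
   apply Rmult_le_compat_l; [lra|]. right. unfold x. apply nrm_proper. intros i j _ _; cbv [msub madd mopp mzero]; ring. }
 assert (HB : nrm (msub (phi d (mscale T X)) (phi d (mscale T mzero))) <= T^2 * x^2 * exp T).
 { unfold phi. eapply Rle_trans. apply phi_lip.
   apply (inS_comm d L HL); apply inS_scale; auto. apply inS_zero.
   assert (E3 : nrm (msub (mscale T X) (mscale T mzero)) = T * x).
   { assert (E3a : meq (msub (mscale T X) (mscale T mzero)) (mscale T X)) by (intros i j _ _; cbv [msub madd mopp mscale mzero]; ring).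
     rewrite E3a, nrm_scale, Rabs_pos_eq by lra. reflexivity. }
   assert (E4 : nrm (mscale T mzero) = 0). { rewrite nrm_scale, Hz. ring. }
   rewrite E3, E4, Rplus_0_l. apply Rmult_le_compat. nra. left; apply exp_pos. right; ring.
   apply exp_mono. nra. }
 apply Rle_trans with (/ T * (lam * (nN d L * (K2 d L T * x)) + T^2 * x^2 * exp T)).
 apply Rmult_le_compat_l. left; apply Rinv_0_lt_compat; lra. lra.
 assert (Hx2 : x ^ 2 <= (2 * lam * c0 d L T)^2) by (apply pow_incr; lra).
 assert (0 <= nN d L * K2 d L T) by (apply Rmult_le_pos; lra).
 apply Rle_trans with (/ T * (lam * (nN d L * K2 d L T * (2 * lam * c0 d L T)) + T^2 * (2 * lam * c0 d L T)^2 * exp T)).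
 apply Rmult_le_compat_l. left; apply Rinv_0_lt_compat; lra. apply Rplus_le_compat.
 replace (lam * (nN d L * (K2 d L T * x))) with (lam * (nN d L * K2 d L T) * x) by ring.
 replace (lam * (nN d L * K2 d L T * (2 * lam * c0 d L T))) with (lam * (nN d L * K2 d L T) * (2 * lam * c0 d L T)) by ring.
 apply Rmult_le_compat_l. apply Rmult_le_pos; lra. lra.
 apply Rmult_le_compat_r. left; apply exp_pos. apply Rmult_le_compat_l. nra. auto.
 right. unfold Kq. field. lra. Qed.

End Fin.

End I.
Import I.
Open Scope R_scope.

Theorem theorem2 (d : nat) (T : R) (Rm : Mat)
  (HT : 0 < T) (Hnormal : normal d Rm) (HP1 : P1 d Rm) :
  (* (i) *)
  (forall C : Mat, normal d C ->
     (char_eq d T 0 Rm C <-> meq d (mexp d (mscale T C)) Rm))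
  /\
  (* (ii) *)
  (forall L : Mat, normal d L -> meq d (mexp d L) Rm ->
     exists (delta : R) (Cf : R -> Mat),
       0 < delta /\
       (* continuity on the neighborhood N = [0, delta) of 0 in R^+ *)
       (forall lam, 0 <= lam < delta ->
          forall i j, (i < d)%nat -> (j < d)%nat ->
            limit1_in (fun l => Cf l i j) (fun l => 0 <= l < delta)
                      (Cf lam i j) lam) /\
       (forall lam, 0 <= lam < delta ->
          normal d (Cf lam) /\ char_eq d T lam Rm (Cf lam)) /\
       meq d (Cf 0) (mscale (/ T) L) /\
       (* C(lam) = L/T - lam/T^2 (R R^T)^{-1} L + O(lam^2) as lam -> 0+ *)
       (exists K eps : R, 0 < eps /\
          forall lam, 0 <= lam < eps ->
            forall i j, (i < d)%nat -> (j < d)%nat ->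
              Rabs (Cf lam i j
                    - (mscale (/ T) L i j
                       - mscale (lam / T ^ 2)
                           (mmul d (minv d (mmul d Rm (mtr Rm))) L) i j))
              <= K * lam ^ 2)).
Proof.
 split.
 - intros C HC. apply part_i; auto.
 - intros L HLn HLR.
   exists (delta d L T), (fun lam => CX L T (Xf d L T lam)).
   assert (Hdp := delta_pos d L T HT).
   split; [exact Hdp|]. split.
   + intros lam Hl i j Hi Hj eps Heps.
     set (K := 2 * K3 d L T). assert (HK : 0 <= K) by (unfold K; generalize (K3_pos d L T HT); lra).
     exists (eps / (K + 1)). split. apply Rdiv_lt_0_compat; lra.
     intros x [Dx Hdx]. simpl in Hdx |- *. unfold R_dist in *.
     assert (E : CX L T (Xf d L T x) i j - CX L T (Xf d L T lam) i j = msub (Xf d L T x) (Xf d L T lam) i j)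
       by (unfold CX; cbv [msub madd mopp mscale]; ring).
     rewrite E. eapply Rle_lt_trans. apply (nrm_entry d _ i j Hi Hj).
     eapply Rle_lt_trans. apply Xf_B2; auto. fold K.
     apply Rle_lt_trans with (K * (eps / (K + 1))). apply Rmult_le_compat_l; auto. lra.
     apply Rmult_lt_reg_r with (K + 1). lra. field_simplify; lra.
   + split.
     * intros lam Hl. destruct (Xf_ball d L HLn T HT lam Hl) as [HS _]. split.
       apply (inS_normal d L HLn). apply inS_CX; auto.
       apply (fix_char d L HLn T HT Rm HLR lam). auto. apply Xf_fix; auto.
     * split.
       -- assert (Hl0 : 0 <= 0 < delta d L T) by lra.
          assert (Hz : meq d (Xf d L T 0) mzero).
          { apply nrm0_meq. generalize (Xf_B1 d L HLn T HT 0 Hl0). lra. }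
          intros i j Hi Hj. unfold CX, madd. rewrite (Hz i j Hi Hj). unfold mzero. ring.
       -- exists (Kq d L T), (delta d L T). split; [exact Hdp|].
          intros lam Hl i j Hi Hj.
          assert (HM := mmul_proper d _ _ (minv_eq d L Rm HLR) L L (reflexivity L) i j Hi Hj).
          unfold Mm in HM. unfold mscale at 2. rewrite HM.
          assert (E : CX L T (Xf d L T lam) i j - (mscale (/ T) L i j - lam / T ^ 2 * mmul d (Ninv d L) L i j)
                    = madd (Xf d L T lam) (mscale (lam / T^2) (mmul d (Ninv d L) L)) i j)
            by (unfold CX; cbv [madd mscale]; ring).
          rewrite E. eapply Rle_trans. apply (nrm_entry d _ i j Hi Hj). apply Xf_B3; auto.
Qed.
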